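(* Let $\omega_1,\dots,\omega_4\in S\oplus V$ be linearly independent over $\mathbb{R}$, $L=\{\sum_{\alpha=1}^42k_\alpha\omega_\alpha:k\in\mathbb{Z}^4\}$, $\{w_p\}_{p\ge1}$ an enumeration of $L\setminus\{0\}$, and $$\zeta_4(x)=x^{-1}+\sum_{p=1}^\infty\Big\{(x-w_p)^{-1}+\sum_{\mu=0}^{3}(w_p^{-1}x)^\mu w_p^{-1}\Big\},\quad x\in(S\oplus V)\setminus L.$$ Let $\mathcal{P}_0=\partial^3\zeta_4/\partial x_0^3$ and $D_0=\partial/\partial x_0$. Then $D_0\mathcal{P}_0$ vanishes at each of the $15$ points $\sum_{\alpha=1}^4\varepsilon_\alpha\omega_\alpha$ with $\varepsilon\in\{0,1\}^4\setminus\{(0,0,0,0)\}$.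
   Context: $\mathbb{R}_{0,3}$ is the real Clifford algebra generated by $e_1,e_2,e_3$ with $e_ie_j+e_je_i=-2\delta_{ij}$; $e_0=1$. $S\oplus V$ is the set of paravectors $x=x_0+\sum_{j=1}^3x_je_j$, identified with $\mathbb{R}^4$; for $x\neq0$, $x^{-1}=\bar x/|x|^2$ with $\bar x=x_0-\sum_jx_je_j$. *)

(* Defs.v *)
From Stdlib Require Import Reals ZArith Arith.
From Coquelicot Require Import Coquelicot.
Open Scope R_scope.

Fixpoint rsum (f : nat -> R) (n : nat) : R :=
  match n with O => 0 | S m => rsum f m + f m end.

(* ---------- The Clifford algebra R_{0,3} ----------
   An element is given by its 8 real coordinates on the basis blades e_A,
   A ⊆ {1,2,3}, encoded as a bitmask A in 0..7: bit k (k=0,1,2) set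
   means e_{k+1} occurs.  So index 0 = 1, 1 = e1, 2 = e2, 4 = e3,
   3 = e1e2, 5 = e1e3, 6 = e2e3, 7 = e1e2e3.  Indices >= 8 are unused (0). *)
Definition Cl := nat -> R.

Definition bit (A i : nat) : nat := if Nat.testbit A i then 1%nat else 0%nat.

Definition swaps (A B : nat) : nat :=
  (bit A 1 * bit B 0 + bit A 2 * bit B 0 + bit A 2 * bit B 1)%nat.

Definition common (A B : nat) : nat :=
  (bit A 0 * bit B 0 + bit A 1 * bit B 1 + bit A 2 * bit B 2)%nat.

(* e_A e_B = blade_sign A B * e_{A xor B}, using e_i e_j = - e_j e_i (i<>j)
   and e_i e_i = -1. *)
Definition blade_sign (A B : nat) : R := (-1) ^ (swaps A B + common A B).

Definition clzero : Cl := fun _ => 0.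
Definition clone : Cl := fun A => if (A =? 0)%nat then 1 else 0.
Definition cladd (a b : Cl) : Cl := fun A => a A + b A.

Definition clmul (a b : Cl) : Cl := fun C =>
  if (C <? 8)%nat then
    rsum (fun A => a A * b (Nat.lxor A C) * blade_sign A (Nat.lxor A C)) 8
  else 0.

Fixpoint clpow (a : Cl) (n : nat) : Cl :=
  match n with O => clone | S m => clmul (clpow a m) a end.

Fixpoint clsum (f : nat -> Cl) (n : nat) : Cl :=
  match n with O => clzero | S m => cladd (clsum f m) (f m) end.

(* ---------- Paravectors S ⊕ V ≅ R^4 ----------
   A paravector x = x0 + x1 e1 + x2 e2 + x3 e3 is given by v : nat -> R,
   only v 0 .. v 3 being relevant. *)
Definition Para := nat -> R.

Definition para (v : Para) : Cl := fun A =>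
  if (A =? 0)%nat then v 0%nat
  else if (A =? 1)%nat then v 1%nat
  else if (A =? 2)%nat then v 2%nat
  else if (A =? 4)%nat then v 3%nat
  else 0.

Definition psub (x y : Para) : Para := fun j => x j - y j.

Definition pnorm2 (v : Para) : R :=
  v 0%nat ^ 2 + v 1%nat ^ 2 + v 2%nat ^ 2 + v 3%nat ^ 2.

(* x^{-1} = conj(x) / |x|^2 *)
Definition pinv (v : Para) : Para := fun j =>
  (if (j =? 0)%nat then v j else - v j) / pnorm2 v.

Definition peq (x y : Para) : Prop := forall j, (j < 4)%nat -> x j = y j.

Definition pzero : Para := fun _ => 0.

Definition lin_indep4 (omega : nat -> Para) : Prop :=
  forall c : nat -> R,
    (forall j, (j < 4)%nat -> rsum (fun a => c a * omega a j) 4 = 0) ->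
    forall a, (a < 4)%nat -> c a = 0.

Definition inL (omega : nat -> Para) (y : Para) : Prop :=
  exists k : nat -> Z,
    forall j, (j < 4)%nat -> y j = rsum (fun a => 2 * IZR (k a) * omega a j) 4.

(* w : nat -> Para enumerates L \ {0}  (w p plays the role of w_{p+1}). *)
Definition enumerates_L0 (omega : nat -> Para) (w : nat -> Para) : Prop :=
  (forall p, inL omega (w p) /\ ~ peq (w p) pzero) /\
  (forall p q, peq (w p) (w q) -> p = q) /\
  (forall y, inL omega y -> ~ peq y pzero -> exists p, peq (w p) y).

Definition zterm (w x : Para) : Cl :=
  cladd (para (pinv (psub x w)))
        (clsum (fun mu => clmul (clpow (clmul (para (pinv w)) (para x)) mu)
                                (para (pinv w))) 4).

Definition zpartial (w : nat -> Para) (x : Para) (N : nat) : Cl :=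
  cladd (para (pinv x)) (clsum (fun p => zterm (w p) x) N).

Definition zeta4 (w : nat -> Para) (x : Para) : Cl :=
  fun A => real (Lim_seq (fun N => zpartial w x N A)).

Definition shift0 (x : Para) (t : R) : Para :=
  fun j => if (j =? 0)%nat then x j + t else x j.

Definition halfper (omega : nat -> Para) (eps : nat -> bool) : Para :=
  fun j => rsum (fun a => if eps a then omega a j else 0) 4.

(* Main.v *)
Require Import Defs.
From Stdlib Require Import Reals ZArith Arith.
From Coquelicot Require Import Coquelicot.
Open Scope R_scope.
From Stdlib Require Import Lra Lia Setoid Morphisms Bool FunctionalExtensionality IndefiniteDescription Ranalysis5 PSeries_reg.

Module MX.
From HB Require Import structures.
From mathcomp Require Import all_boot all_algebra.
From mathcomp Require Import Rstruct.
Import GRing.Theory.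

Lemma rsum4 (f : nat -> R) : rsum f 4 = Rplus (Rplus (Rplus (f 0%nat) (f 1%nat)) (f 2%nat)) (f 3%nat).
Proof. simpl. rewrite Rplus_0_l. reflexivity. Qed.

Local Open Scope ring_scope.
Lemma big4 (F : 'I_4 -> R) : \sum_(i < 4) F i = F (inord 0) + F (inord 1) + F (inord 2) + F (inord 3).
Proof.
  rewrite (eq_bigr (fun i : 'I_4 => F (inord (nat_of_ord i)))); last by move=> i _; rewrite inord_val.
  rewrite -(big_mkord xpredT (fun k => F (inord k))).
  rewrite /index_iota /= !big_cons big_nil /=.
  by rewrite addr0 !addrA.
Qed.

Lemma lattice_inverse (omega : nat -> Para) : lin_indep4 omega ->
  exists N : nat -> nat -> R, forall v : nat -> R, forall a, (a < 4)%coq_nat ->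
    v a = rsum (fun j => Rmult (rsum (fun i => Rmult (v i) (omega i j)) 4) (N j a)) 4.
Proof.
  move=> Hli.
  pose M : 'M[R]_4 := \matrix_(i < 4, j < 4) omega i j.
  have Mu : M \in unitmx.
    rewrite -row_free_unit; apply: inj_row_free => v Hv.
    apply/rowP => i; rewrite !mxE.
    have := Hli (fun a => v ord0 (inord a)).
    move=> H.
    have H' : forall j, (j < 4)%coq_nat -> rsum (fun a => (v ord0 (inord a) * omega a j)%R) 4 = 0%R.
      move=> j /ltP Hj.
      rewrite rsum4.
      have := congr1 (fun m : 'rV_4 => m ord0 (inord j)) Hv.
      rewrite !mxE big4 !mxE !inordK //.
    have := H H' i (ltP (ltn_ord i)). rewrite inord_val. done.
  exists (fun j a => invmx M (inord j) (inord a)).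
  move=> v a /ltP Ha.
  pose rv : 'rV[R]_4 := \row_i v i.
  have E := mulmxK Mu rv.
  rewrite !rsum4.
  have := congr1 (fun m : 'rV_4 => m ord0 (inord a)) E.
  rewrite !mxE big4 !mxE !big4 /rv !mxE !inordK //.
Qed.
End MX.

Ltac redx := repeat match goal with |- context [Nat.lxor ?x ?y] => let v := eval vm_compute in (Nat.lxor x y) in change (Nat.lxor x y) with v end.
Ltac clsimp := unfold clmul, blade_sign, swaps, common, bit; simpl; redx.
Lemma clmul_0 (a b : Cl) : clmul a b 0%nat = a 0%nat * b 0%nat - a 1%nat * b 1%nat - a 2%nat * b 2%nat - a 3%nat * b 3%nat - a 4%nat * b 4%nat - a 5%nat * b 5%nat - a 6%nat * b 6%nat + a 7%nat * b 7%nat.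
Proof. clsimp; ring. Qed.
Lemma clmul_1 (a b : Cl) : clmul a b 1%nat = a 0%nat * b 1%nat + a 1%nat * b 0%nat + a 2%nat * b 3%nat - a 3%nat * b 2%nat + a 4%nat * b 5%nat - a 5%nat * b 4%nat - a 6%nat * b 7%nat - a 7%nat * b 6%nat.
Proof. clsimp; ring. Qed.
Lemma clmul_2 (a b : Cl) : clmul a b 2%nat = a 0%nat * b 2%nat - a 1%nat * b 3%nat + a 2%nat * b 0%nat + a 3%nat * b 1%nat + a 4%nat * b 6%nat + a 5%nat * b 7%nat - a 6%nat * b 4%nat + a 7%nat * b 5%nat.
Proof. clsimp; ring. Qed.
Lemma clmul_3 (a b : Cl) : clmul a b 3%nat = a 0%nat * b 3%nat + a 1%nat * b 2%nat - a 2%nat * b 1%nat + a 3%nat * b 0%nat - a 4%nat * b 7%nat + a 5%nat * b 6%nat - a 6%nat * b 5%nat - a 7%nat * b 4%nat.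
Proof. clsimp; ring. Qed.
Lemma clmul_4 (a b : Cl) : clmul a b 4%nat = a 0%nat * b 4%nat - a 1%nat * b 5%nat - a 2%nat * b 6%nat - a 3%nat * b 7%nat + a 4%nat * b 0%nat + a 5%nat * b 1%nat + a 6%nat * b 2%nat - a 7%nat * b 3%nat.
Proof. clsimp; ring. Qed.
Lemma clmul_5 (a b : Cl) : clmul a b 5%nat = a 0%nat * b 5%nat + a 1%nat * b 4%nat + a 2%nat * b 7%nat - a 3%nat * b 6%nat - a 4%nat * b 1%nat + a 5%nat * b 0%nat + a 6%nat * b 3%nat + a 7%nat * b 2%nat.
Proof. clsimp; ring. Qed.
Lemma clmul_6 (a b : Cl) : clmul a b 6%nat = a 0%nat * b 6%nat - a 1%nat * b 7%nat + a 2%nat * b 4%nat + a 3%nat * b 5%nat - a 4%nat * b 2%nat - a 5%nat * b 3%nat + a 6%nat * b 0%nat - a 7%nat * b 1%nat.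
Proof. clsimp; ring. Qed.
Lemma clmul_7 (a b : Cl) : clmul a b 7%nat = a 0%nat * b 7%nat + a 1%nat * b 6%nat - a 2%nat * b 5%nat + a 3%nat * b 4%nat + a 4%nat * b 3%nat - a 5%nat * b 2%nat + a 6%nat * b 1%nat + a 7%nat * b 0%nat.
Proof. clsimp; ring. Qed.
Ltac clm := repeat (rewrite ?clmul_0, ?clmul_1, ?clmul_2, ?clmul_3, ?clmul_4, ?clmul_5, ?clmul_6, ?clmul_7).
Ltac on8 tac := let C := fresh "C" in let HC := fresh "HC" in intros C HC;
  do 8 (destruct C as [|C]; [ tac | ]); lia.

Definition ceq (a b : Cl) : Prop := forall A, (A < 8)%nat -> a A = b A.
Definition clopp (a : Cl) : Cl := fun A => - a A.
Definition clsub (a b : Cl) : Cl := cladd a (clopp b).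

Lemma ceq_refl a : ceq a a. Proof. intros A _; reflexivity. Qed.
Lemma ceq_sym a b : ceq a b -> ceq b a. Proof. intros H A HA; rewrite H; auto. Qed.
Lemma ceq_trans a b c : ceq a b -> ceq b c -> ceq a c.
Proof. intros H1 H2 A HA; rewrite H1, H2; auto. Qed.

Add Parametric Relation : Cl ceq
  reflexivity proved by ceq_refl symmetry proved by ceq_sym
  transitivity proved by ceq_trans as ceq_rel.

Add Parametric Morphism : cladd with signature ceq ==> ceq ==> ceq as cladd_mor.
Proof. intros a a' Ha b b' Hb A HA; unfold cladd; rewrite Ha, Hb; auto. Qed.
Add Parametric Morphism : clopp with signature ceq ==> ceq as clopp_mor.
Proof. intros a a' Ha A HA; unfold clopp; rewrite Ha; auto. Qed.
Add Parametric Morphism : clsub with signature ceq ==> ceq ==> ceq as clsub_mor.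
Proof. intros a a' Ha b b' Hb; unfold clsub; rewrite Ha, Hb; reflexivity. Qed.
Add Parametric Morphism : clmul with signature ceq ==> ceq ==> ceq as clmul_mor.
Proof.
  intros a a' Ha b b' Hb.
  on8 ltac:(clm; rewrite ?(Ha 0%nat), ?(Ha 1%nat), ?(Ha 2%nat), ?(Ha 3%nat), ?(Ha 4%nat), ?(Ha 5%nat), ?(Ha 6%nat), ?(Ha 7%nat),
    ?(Hb 0%nat), ?(Hb 1%nat), ?(Hb 2%nat), ?(Hb 3%nat), ?(Hb 4%nat), ?(Hb 5%nat), ?(Hb 6%nat), ?(Hb 7%nat) by lia; reflexivity).
Qed.
Add Parametric Morphism n : (fun a => clpow a n) with signature ceq ==> ceq as clpow_mor.
Proof. intros a a' Ha; induction n; simpl. reflexivity. rewrite IHn, Ha; reflexivity. Qed.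

Lemma clsum_ext f g n : (forall m, (m < n)%nat -> ceq (f m) (g m)) -> ceq (clsum f n) (clsum g n).
Proof.
  induction n; intros H; simpl. reflexivity.
  assert (IH : ceq (clsum f n) (clsum g n)) by (apply IHn; intros; apply H; lia).
  rewrite IH, (H n) by lia; reflexivity.
Qed.

Lemma clmul_assoc a b c : ceq (clmul (clmul a b) c) (clmul a (clmul b c)).
Proof. on8 ltac:(clm; ring). Qed.
Lemma clmul_addr a b c : ceq (clmul a (cladd b c)) (cladd (clmul a b) (clmul a c)).
Proof. on8 ltac:(unfold cladd; clm; ring). Qed.
Lemma clmul_addl a b c : ceq (clmul (cladd a b) c) (cladd (clmul a c) (clmul b c)).
Proof. on8 ltac:(unfold cladd; clm; ring). Qed.
Lemma clmul_oppl a b : ceq (clmul (clopp a) b) (clopp (clmul a b)).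
Proof. on8 ltac:(unfold clopp; clm; ring). Qed.
Lemma clmul_oppr a b : ceq (clmul a (clopp b)) (clopp (clmul a b)).
Proof. on8 ltac:(unfold clopp; clm; ring). Qed.
Lemma clmul_1l a : ceq (clmul clone a) a.
Proof. on8 ltac:(clm; unfold clone; simpl; ring). Qed.
Lemma clmul_1r a : ceq (clmul a clone) a.
Proof. on8 ltac:(clm; unfold clone; simpl; ring). Qed.
Lemma clmul_0l a : ceq (clmul clzero a) clzero.
Proof. on8 ltac:(clm; unfold clzero; simpl; ring). Qed.
Lemma clmul_0r a : ceq (clmul a clzero) clzero.
Proof. on8 ltac:(clm; unfold clzero; simpl; ring). Qed.

Lemma clmul_sumr a f n : ceq (clmul a (clsum f n)) (clsum (fun m => clmul a (f m)) n).
Proof. induction n; simpl. apply clmul_0r. rewrite clmul_addr, IHn; reflexivity. Qed.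

Lemma swap_pow P Q m : ceq (clmul P (clpow (clmul Q P) m)) (clmul (clpow (clmul P Q) m) P).
Proof.
  induction m; simpl. rewrite clmul_1l, clmul_1r; reflexivity.
  rewrite <- clmul_assoc, IHm, !clmul_assoc. reflexivity.
Qed.

Lemma para_sub x w : ceq (para (psub x w)) (clsub (para x) (para w)).
Proof. on8 ltac:(unfold para, psub, clsub, cladd, clopp; simpl; ring). Qed.

Lemma pinv_r y : pnorm2 y <> 0 -> ceq (clmul (para y) (para (pinv y))) clone.
Proof. intros Hy. on8 ltac:(clm; unfold para, pinv, clone; simpl; unfold pnorm2 in *; field; auto). Qed.
Lemma pinv_l y : pnorm2 y <> 0 -> ceq (clmul (para (pinv y)) (para y)) clone.
Proof. intros Hy. on8 ltac:(clm; unfold para, pinv, clone; simpl; unfold pnorm2 in *; field; auto). Qed.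

Lemma zterm_identity w x : pnorm2 w <> 0 -> pnorm2 (psub x w) <> 0 ->
  ceq (zterm w x) (clmul (para (pinv (psub x w))) (clpow (clmul (para x) (para (pinv w))) 4)).
Proof.
  intros Hw Hy. unfold zterm.
  assert (HY : ceq (clmul (clsub (para x) (para w)) (para (pinv (psub x w)))) clone).
  { rewrite <- para_sub. apply pinv_r; auto. }
  assert (HYl : ceq (clmul (para (pinv (psub x w))) (clsub (para x) (para w))) clone).
  { rewrite <- para_sub. apply pinv_l; auto. }
  assert (HWU : ceq (clmul (para w) (para (pinv w))) clone) by (apply pinv_r; auto).
  set (X := para x) in *. set (W := para w) in *. set (U := para (pinv w)) in *.
  set (Yi := para (pinv (psub x w))) in *.
  set (z := clmul X U).
  assert (key : forall m, ceq (clmul (clsub X W) (clmul (clpow (clmul U X) m) U))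
                             (clsub (clpow z (S m)) (clpow z m))).
  { intros m. unfold clsub. rewrite clmul_addl, clmul_oppl.
    rewrite <- (clmul_assoc X), (swap_pow X U m), clmul_assoc.
    rewrite <- (swap_pow U X m), <- (clmul_assoc W U), HWU, clmul_1l.
    reflexivity. }
  assert (HL : ceq (clmul (clsub X W) (cladd Yi (clsum (fun mu => clmul (clpow (clmul U X) mu) U) 4)))
                   (clpow z 4)).
  { rewrite clmul_addr, HY, clmul_sumr.
    rewrite (clsum_ext _ (fun m => clsub (clpow z (S m)) (clpow z m))) by (intros; apply key).
    simpl clsum. intros C HC. unfold cladd, clsub, cladd, clopp, clzero. simpl. ring. }
  rewrite <- (clmul_1l (cladd Yi _)). rewrite <- HYl. rewrite clmul_assoc, HL. reflexivity.
Qed.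

Definition cnorm (a : Cl) : R := rsum (fun A => Rabs (a A)) 8.

Lemma rsum_le f g n : (forall i, (i < n)%nat -> f i <= g i) -> rsum f n <= rsum g n.
Proof. induction n; simpl; intros H. lra. apply Rplus_le_compat; auto. Qed.
Lemma rsum_abs f n : Rabs (rsum f n) <= rsum (fun i => Rabs (f i)) n.
Proof. induction n; simpl. rewrite Rabs_R0; lra. eapply Rle_trans. apply Rabs_triang. lra. Qed.
Lemma rsum_nonneg f n : (forall i, (i < n)%nat -> 0 <= f i) -> 0 <= rsum f n.
Proof. induction n; simpl; intros H. lra. assert (0 <= f n) by auto. assert (0 <= rsum f n) by auto. lra. Qed.
Lemma rsum_plus f g n : rsum (fun i => f i + g i) n = rsum f n + rsum g n.
Proof. induction n; simpl. lra. rewrite IHn; ring. Qed.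
Lemma rsum_scal c f n : rsum (fun i => c * f i) n = c * rsum f n.
Proof. induction n; simpl. ring. rewrite IHn; ring. Qed.
Lemma rsum_ext f g n : (forall i, (i < n)%nat -> f i = g i) -> rsum f n = rsum g n.
Proof. induction n; simpl; intros H. auto. rewrite IHn, H; auto. Qed.
Lemma rsum_elem f n i : (i < n)%nat -> (forall j, (j < n)%nat -> 0 <= f j) -> f i <= rsum f n.
Proof.
  induction n; intros Hi H. lia. simpl.
  destruct (Nat.eq_dec i n). subst. assert (0 <= rsum f n) by (apply rsum_nonneg; auto). lra.
  assert (f i <= rsum f n) by (apply IHn; auto; lia). assert (0 <= f n) by auto. lra.
Qed.

Lemma cnorm_nonneg a : 0 <= cnorm a.
Proof. apply rsum_nonneg; intros; apply Rabs_pos. Qed.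
Lemma cnorm_coord a A : (A < 8)%nat -> Rabs (a A) <= cnorm a.
Proof. intros; unfold cnorm; apply (rsum_elem (fun A => Rabs (a A))); auto; intros; apply Rabs_pos. Qed.

Lemma sign_abs A B : Rabs (blade_sign A B) = 1.
Proof. unfold blade_sign. apply pow_1_abs. Qed.

Lemma cnorm_mul a b : cnorm (clmul a b) <= cnorm a * cnorm b.
Proof.
  unfold cnorm.
  apply Rle_trans with (rsum (fun C => rsum (fun A => Rabs (a A) * Rabs (b (Nat.lxor A C))) 8) 8).
  - apply rsum_le. intros C HC. unfold clmul.
    replace (C <? 8)%nat with true by (symmetry; apply Nat.ltb_lt; auto).
    eapply Rle_trans. apply rsum_abs. apply rsum_le. intros A HA.
    rewrite !Rabs_mult, sign_abs. lra.
  - simpl. redx. lra.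
Qed.

Definition pmax (y : Para) : R :=
  Rmax (Rmax (Rabs (y 0%nat)) (Rabs (y 1%nat))) (Rmax (Rabs (y 2%nat)) (Rabs (y 3%nat))).

Lemma pmax_nonneg y : 0 <= pmax y.
Proof. unfold pmax. eapply Rle_trans. apply Rabs_pos. eapply Rle_trans. apply Rmax_l. apply Rmax_l. Qed.

Lemma pmax_ge y j : (j < 4)%nat -> Rabs (y j) <= pmax y.
Proof.
  intros Hj; unfold pmax.
  destruct j as [|[|[|[|]]]]; try lia.
  - eapply Rle_trans; [apply Rmax_l|apply Rmax_l].
  - eapply Rle_trans; [apply Rmax_r|apply Rmax_l].
  - eapply Rle_trans; [apply Rmax_l|apply Rmax_r].
  - eapply Rle_trans; [apply Rmax_r|apply Rmax_r].
Qed.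

Lemma pmax_sq y : pmax y * pmax y <= pnorm2 y.
Proof.
  unfold pmax, pnorm2, Rmax.
  assert (H0 := Rabs_pos (y 0%nat)); assert (H1 := Rabs_pos (y 1%nat));
  assert (H2 := Rabs_pos (y 2%nat)); assert (H3 := Rabs_pos (y 3%nat)).
  assert (E : forall x, x ^ 2 = Rabs x * Rabs x) by (intros; rewrite <- Rabs_mult, Rabs_right; [ring| nra]).
  rewrite !E.
  repeat destruct Rle_dec; nra.
Qed.

Lemma cnorm_para y : cnorm (para y) <= 4 * pmax y.
Proof.
  unfold cnorm, para. simpl. rewrite !Rabs_R0.
  assert (H0 := pmax_ge y 0%nat ltac:(lia)); assert (H1 := pmax_ge y 1%nat ltac:(lia));
  assert (H2 := pmax_ge y 2%nat ltac:(lia)); assert (H3 := pmax_ge y 3%nat ltac:(lia)). lra.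
Qed.

Lemma cnorm_para_pinv y : 0 < pmax y -> cnorm (para (pinv y)) <= 4 / pmax y.
Proof.
  intros Hp. assert (Hs := pmax_sq y).
  assert (Hn : 0 < pnorm2 y) by nra.
  unfold cnorm, para, pinv. simpl. rewrite !Rabs_R0.
  unfold Rdiv. rewrite !Rabs_mult, !Rabs_Ropp, (Rabs_right (/ pnorm2 y)) by (apply Rle_ge, Rlt_le, Rinv_0_lt_compat; auto).
  assert (H0 := pmax_ge y 0%nat ltac:(lia)); assert (H1 := pmax_ge y 1%nat ltac:(lia));
  assert (H2 := pmax_ge y 2%nat ltac:(lia)); assert (H3 := pmax_ge y 3%nat ltac:(lia)).
  apply Rle_trans with (4 * pmax y * / pnorm2 y).
  - assert (0 < / pnorm2 y) by (apply Rinv_0_lt_compat; auto). nra.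
  - apply Rle_trans with (4 * pmax y * / (pmax y * pmax y)).
    + apply Rmult_le_compat_l. lra. apply Rinv_le_contravar; nra.
    + right. field. lra.
Qed.

Lemma cnorm_add a b : cnorm (cladd a b) <= cnorm a + cnorm b.
Proof. unfold cnorm, cladd. rewrite <- rsum_plus. apply rsum_le. intros; apply Rabs_triang. Qed.

Lemma cnorm_zero : cnorm clzero = 0.
Proof. unfold cnorm, clzero. simpl. rewrite Rabs_R0. ring. Qed.
Lemma cnorm_one : cnorm clone = 1.
Proof. unfold cnorm, clone. simpl. rewrite Rabs_R0, Rabs_R1. ring. Qed.

Lemma lxor_lt8 A C : (A < 8)%nat -> (C < 8)%nat -> (Nat.lxor A C < 8)%nat.
Proof.
  intros HA HC.
  do 8 (destruct A as [|A]; [ do 8 (destruct C as [|C]; [ vm_compute; lia | ]); lia | ]); lia.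
Qed.

Add Parametric Morphism : cnorm with signature ceq ==> eq as cnorm_mor.
Proof. intros a b H. unfold cnorm. apply rsum_ext. intros; rewrite H; auto. Qed.

Lemma cnorm_opp a : cnorm (clopp a) = cnorm a.
Proof. unfold cnorm, clopp. apply rsum_ext. intros; apply Rabs_Ropp. Qed.

Definition Cderiv (F F' : R -> Cl) (t : R) : Prop :=
  forall A, (A < 8)%nat -> is_derive (fun s => F s A) t (F' t A).

Lemma is_derive_c (c t : R) : is_derive (fun _ => c) t 0.
Proof. exact (@is_derive_const R_AbsRing R_NormedModule c t). Qed.

Lemma is_derive_mulc (f : R -> R) x df c : is_derive f x df -> is_derive (fun s => f s * c) x (df * c).
Proof.
  intros H. apply (is_derive_ext (fun s => c * f s)); [intros; apply Rmult_comm|].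
  replace (df * c) with (c * df) by ring. apply is_derive_scal; auto.
Qed.

Lemma is_derive_mul2 (f g : R -> R) x df dg : is_derive f x df -> is_derive g x dg ->
  is_derive (fun s => f s * g s) x (df * g x + f x * dg).
Proof. intros Hf Hg. apply (is_derive_mult f g); auto. intros; apply Rmult_comm. Qed.

Lemma is_derive_rsum (f : nat -> R -> R) (df : nat -> R) n t :
  (forall i, (i < n)%nat -> is_derive (f i) t (df i)) ->
  is_derive (fun s => rsum (fun i => f i s) n) t (rsum df n).
Proof.
  induction n; intros H; simpl.
  - apply is_derive_c.
  - apply (is_derive_plus (fun s => rsum (fun i => f i s) n) (f n)); auto.
Qed.

Lemma inB_loc r t : Rabs t < r -> locally t (fun s => Rabs s < r).
Proof.
  intros Ht. assert (He : 0 < r - Rabs t) by lra.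
  exists (mkposreal _ He). intros s Hs. simpl in Hs.
  unfold ball in Hs; simpl in Hs; unfold AbsRing_ball, abs, minus, plus, opp in Hs; simpl in Hs.
  assert (Rabs s <= Rabs t + Rabs (s - t)).
  { replace s with (t + (s - t)) at 1 by ring. apply Rabs_triang. }
  unfold Rminus in *. lra.
Qed.

Lemma Cderiv_add F F' G G' t : Cderiv F F' t -> Cderiv G G' t ->
  Cderiv (fun s => cladd (F s) (G s)) (fun s => cladd (F' s) (G' s)) t.
Proof. intros HF HG A HA. unfold cladd. apply (is_derive_plus (fun s => F s A) (fun s => G s A)); auto. Qed.

Lemma Cderiv_opp F F' t : Cderiv F F' t -> Cderiv (fun s => clopp (F s)) (fun s => clopp (F' s)) t.
Proof. intros HF A HA. unfold clopp. apply (is_derive_opp (fun s => F s A)); auto. Qed.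

Lemma Cderiv_const K t : Cderiv (fun _ => K) (fun _ => clzero) t.
Proof. intros A HA. unfold clzero. apply is_derive_c. Qed.

Lemma Cderiv_val F F1 F2 t : Cderiv F F1 t -> ceq (F1 t) (F2 t) -> Cderiv F F2 t.
Proof. intros H E A HA. rewrite <- E by auto. auto. Qed.

Lemma Cderiv_loc F G F' t : locally t (fun s => ceq (F s) (G s)) -> Cderiv F F' t -> Cderiv G F' t.
Proof.
  intros Hl H A HA. apply (is_derive_ext_loc (fun s => F s A)); auto.
  eapply filter_imp; [|exact Hl]. intros s Hs; simpl; auto.
Qed.

Lemma Cderiv_mul F F' G G' t : Cderiv F F' t -> Cderiv G G' t ->
  Cderiv (fun s => clmul (F s) (G s)) (fun s => cladd (clmul (F' s) (G s)) (clmul (F s) (G' s))) t.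
Proof.
  intros HF HG C HC. unfold clmul, cladd.
  replace (C <? 8)%nat with true by (symmetry; apply Nat.ltb_lt; auto).
  rewrite <- rsum_plus.
  apply (is_derive_rsum (fun A s => F s A * G s (Nat.lxor A C) * blade_sign A (Nat.lxor A C))
     (fun A => F' t A * G t (Nat.lxor A C) * blade_sign A (Nat.lxor A C) + F t A * G' t (Nat.lxor A C) * blade_sign A (Nat.lxor A C))).
  intros A HA.
  assert (HB := lxor_lt8 A C HA HC).
  replace (F' t A * G t (Nat.lxor A C) * blade_sign A (Nat.lxor A C) + F t A * G' t (Nat.lxor A C) * blade_sign A (Nat.lxor A C))
    with ((F' t A * G t (Nat.lxor A C) + F t A * G' t (Nat.lxor A C)) * blade_sign A (Nat.lxor A C)) by ring.
  apply (is_derive_mulc (fun s => F s A * G s (Nat.lxor A C))).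
  apply (is_derive_mul2 (fun s => F s A) (fun s => G s (Nat.lxor A C))); auto.
Qed.

Lemma Cderiv_sum (f f' : nat -> R -> Cl) n t :
  (forall m, (m < n)%nat -> Cderiv (f m) (f' m) t) ->
  Cderiv (fun s => clsum (fun m => f m s) n) (fun s => clsum (fun m => f' m s) n) t.
Proof.
  induction n; intros H; simpl.
  - apply Cderiv_const.
  - apply (Cderiv_add (fun s => clsum (fun m => f m s) n) _ (f n)); auto.
Qed.

Section Classes.
Variable r lam : R.
Hypothesis Hr : 0 < r.
Hypothesis Hlam : 0 <= lam.

Fixpoint Sm (n : nat) (M : R) (F : R -> Cl) {struct n} : Prop :=
  (forall t, Rabs t < r -> cnorm (F t) <= M) /\
  match n with
  | O => True
  | S n' => exists F', (forall t, Rabs t < r -> Cderiv F F' t) /\ Sm n' (M * lam) F'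
  end.

Lemma Sm_nonneg n M F : Sm n M F -> 0 <= M.
Proof.
  destruct n; intros [H _]; (eapply Rle_trans; [apply cnorm_nonneg| apply (H 0); rewrite Rabs_R0; auto]).
Qed.

Lemma Sm_mono n : forall M M' F, M <= M' -> Sm n M F -> Sm n M' F.
Proof.
  induction n; intros M M' F HM [H1 H2]; split.
  - intros t Ht; specialize (H1 t Ht); lra.
  - auto.
  - intros t Ht; specialize (H1 t Ht); lra.
  - destruct H2 as [F' [HD HS]]. exists F'; split; auto.
    apply (IHn (M * lam)); auto. apply Rmult_le_compat_r; auto.
Qed.

Lemma Sm_down n : forall M F, Sm (S n) M F -> Sm n M F.
Proof.
  induction n; intros M F [H1 [F' [HD HS]]].
  - split; auto.
  - split; auto. exists F'; split; auto.
Qed.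

Lemma Sm_ext n : forall M F G, (forall t, Rabs t < r -> ceq (F t) (G t)) -> Sm n M F -> Sm n M G.
Proof.
  intros M F G HE HS. destruct n; destruct HS as [H1 H2]; split;
   try (intros t Ht; rewrite <- (HE t Ht); auto); auto.
  destruct H2 as [F' [HD HS]]. exists F'; split; auto.
  intros t Ht. apply (Cderiv_loc F); auto.
  eapply filter_imp; [|apply (inB_loc r t Ht)]. intros; auto.
Qed.

Lemma Sm_zero n : forall M, 0 <= M -> Sm n M (fun _ => clzero).
Proof.
  induction n; intros M HM; split; try (intros; rewrite cnorm_zero; auto); auto.
  exists (fun _ => clzero); split. intros; apply Cderiv_const.
  apply IHn. apply Rmult_le_pos; auto.
Qed.

Lemma Sm_const n M K : cnorm K <= M -> Sm n M (fun _ => K).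
Proof.
  intros HK. assert (0 <= M) by (eapply Rle_trans; [apply cnorm_nonneg|eauto]).
  destruct n; split; auto.
  exists (fun _ => clzero); split. intros; apply Cderiv_const.
  apply Sm_zero. apply Rmult_le_pos; auto.
Qed.

Lemma Sm_add n : forall M1 M2 F G, Sm n M1 F -> Sm n M2 G -> Sm n (M1 + M2) (fun t => cladd (F t) (G t)).
Proof.
  induction n; intros M1 M2 F G [HF1 HF2] [HG1 HG2]; split.
  - intros t Ht. eapply Rle_trans. apply cnorm_add. specialize (HF1 t Ht); specialize (HG1 t Ht); lra.
  - auto.
  - intros t Ht. eapply Rle_trans. apply cnorm_add. specialize (HF1 t Ht); specialize (HG1 t Ht); lra.
  - destruct HF2 as [F' [HFD HFS]]. destruct HG2 as [G' [HGD HGS]].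
    exists (fun s => cladd (F' s) (G' s)); split.
    + intros; apply Cderiv_add; auto.
    + replace ((M1 + M2) * lam) with (M1 * lam + M2 * lam) by ring. apply IHn; auto.
Qed.

Lemma Sm_opp n : forall M F, Sm n M F -> Sm n M (fun t => clopp (F t)).
Proof.
  induction n; intros M F [HF1 HF2]; split.
  - intros t Ht. rewrite cnorm_opp. auto.
  - auto.
  - intros t Ht. rewrite cnorm_opp. auto.
  - destruct HF2 as [F' [HFD HFS]]. exists (fun s => clopp (F' s)); split.
    + intros; apply Cderiv_opp; auto.
    + apply IHn; auto.
Qed.

Lemma Sm_mul n : forall M1 M2 F G, Sm n M1 F -> Sm n M2 G -> Sm n (2 ^ n * M1 * M2) (fun t => clmul (F t) (G t)).
Proof.
  induction n; intros M1 M2 F G HF HG.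
  - destruct HF as [HF1 _]; destruct HG as [HG1 _]. split; auto.
    intros t Ht. eapply Rle_trans. apply cnorm_mul. simpl.
    specialize (HF1 t Ht); specialize (HG1 t Ht).
    assert (H0 := cnorm_nonneg (F t)); assert (H1 := cnorm_nonneg (G t)). nra.
  - assert (HM1 := Sm_nonneg _ _ _ HF). assert (HM2 := Sm_nonneg _ _ _ HG).
    assert (Hp : 1 <= 2 ^ (S n)) by (apply pow_R1_Rle; lra).
    destruct HF as [HF1 HF2]; destruct HG as [HG1 HG2]. split.
    + intros t Ht. eapply Rle_trans. apply cnorm_mul.
      specialize (HF1 t Ht); specialize (HG1 t Ht).
      assert (H0 := cnorm_nonneg (F t)); assert (H1 := cnorm_nonneg (G t)).
      assert (cnorm (F t) * cnorm (G t) <= M1 * M2) by nra.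
      assert (0 <= M1 * M2) by nra. nra.
    + destruct HF2 as [F' [HFD HFS]]. destruct HG2 as [G' [HGD HGS]].
      exists (fun s => cladd (clmul (F' s) (G s)) (clmul (F s) (G' s))); split.
      * intros; apply Cderiv_mul; auto.
      * assert (HGn : Sm n M2 G) by (apply Sm_down; split; [auto| exists G'; split; auto]).
        assert (HFn : Sm n M1 F) by (apply Sm_down; split; [auto| exists F'; split; auto]).
        replace (2 ^ S n * M1 * M2 * lam) with (2 ^ n * (M1 * lam) * M2 + 2 ^ n * M1 * (M2 * lam)) by (simpl; ring).
        apply Sm_add; apply IHn; auto.
Qed.

Lemma Sm_pow n M F m : Sm n M F -> Sm n ((2 ^ n * M) ^ m) (fun t => clpow (F t) m).
Proof.
  intros HF. induction m; simpl.
  - apply Sm_const. rewrite cnorm_one. lra.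
  - replace ((2 ^ n * M) * (2 ^ n * M) ^ m) with (2 ^ n * (2 ^ n * M) ^ m * M) by ring.
    apply (Sm_mul n _ _ (fun t => clpow (F t) m) F); [exact IHm| exact HF].
Qed.

Lemma Sm_inv n : forall M F, 0 <= M -> 2 ^ n * M <= lam ->
  (forall t, Rabs t < r -> cnorm (F t) <= M) ->
  (forall t, Rabs t < r -> Cderiv F (fun s => clopp (clmul (F s) (F s))) t) -> Sm n M F.
Proof.
  induction n; intros M F HM Hl HB HD; split; auto.
  exists (fun s => clopp (clmul (F s) (F s))); split; auto.
  apply Sm_opp. apply (Sm_mono _ (2 ^ n * M * M)).
  - assert (2 ^ n * M <= lam) by (simpl in Hl; assert (0 <= 2 ^ n * M) by (apply Rmult_le_pos; [apply pow_le; lra| auto]); lra).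
    nra.
  - apply Sm_mul; apply IHn; auto; simpl in Hl; assert (0 <= 2 ^ n * M) by (apply Rmult_le_pos; [apply pow_le; lra| auto]); lra.
Qed.

Lemma Sm_affine n M F K : (forall t, Rabs t < r -> cnorm (F t) <= M) ->
  (forall t, Rabs t < r -> Cderiv F (fun _ => K) t) -> cnorm K <= M * lam -> Sm n M F.
Proof.
  intros HB HD HK. destruct n; split; auto.
  exists (fun _ => K); split; auto. apply Sm_const; auto.
Qed.

Lemma Sm_chain n : forall M F, Sm n M F -> exists D : nat -> R -> Cl, D O = F /\
  (forall j t, (j < n)%nat -> Rabs t < r -> Cderiv (D j) (D (S j)) t) /\
  (forall j t, (j <= n)%nat -> Rabs t < r -> cnorm (D j t) <= M * lam ^ j).
Proof.
  induction n; intros M F [H1 H2].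
  - exists (fun _ => F). split; auto. split. intros; lia.
    intros j t Hj Ht. assert (j = O) by lia. subst. simpl. rewrite Rmult_1_r. auto.
  - destruct H2 as [F' [HD HS]]. destruct (IHn _ _ HS) as [D' [HD0 [HD1 HD2]]].
    exists (fun j => match j with O => F | S j' => D' j' end). split; auto. split.
    + intros [|j] t Hj Ht. rewrite HD0. auto. apply HD1; auto; lia.
    + intros [|j] t Hj Ht. simpl; rewrite Rmult_1_r; auto.
      replace (M * lam ^ S j) with (M * lam * lam ^ j) by (simpl; ring). apply HD2; auto; lia.
Qed.

Fixpoint Pl (n : nat) (F : R -> Cl) {struct n} : Prop :=
  exists F', (forall t, Rabs t < r -> Cderiv F F' t) /\
   match n with O => forall t, Rabs t < r -> ceq (F' t) clzero | S n' => Pl n' F' end.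

Lemma Pl_ext n F G : (forall t, Rabs t < r -> ceq (F t) (G t)) -> Pl n F -> Pl n G.
Proof.
  intros HE. destruct n; intros [F' [HD HS]]; exists F'; split; auto;
  intros t Ht; apply (Cderiv_loc F); auto;
  (eapply filter_imp; [|apply (inB_loc r t Ht)]); intros; auto.
Qed.

Lemma Pl_zero n : Pl n (fun _ => clzero).
Proof.
  induction n; exists (fun _ => clzero); split; try (intros; apply Cderiv_const); auto.
  intros; reflexivity.
Qed.

Lemma Pl_const n K : Pl n (fun _ => K).
Proof.
  destruct n; exists (fun _ => clzero); split; try (intros; apply Cderiv_const).
  intros; reflexivity. apply Pl_zero.
Qed.

Lemma Pl_up n : forall F, Pl n F -> Pl (S n) F.
Proof.
  induction n; intros F [F' [HD HS]]; exists F'; split; auto.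
  apply (Pl_ext 0 (fun _ => clzero)). intros t Ht; symmetry; auto. apply Pl_const.
Qed.

Lemma Pl_up' a n F : (a <= n)%nat -> Pl a F -> Pl n F.
Proof. intros H; induction H; auto. intros; apply Pl_up; auto. Qed.

Lemma Pl_add n : forall F G, Pl n F -> Pl n G -> Pl n (fun t => cladd (F t) (G t)).
Proof.
  induction n; intros F G [F' [HFD HFS]] [G' [HGD HGS]];
  exists (fun s => cladd (F' s) (G' s)); (split; [intros; apply Cderiv_add; auto|]).
  - intros t Ht. rewrite (HFS t Ht), (HGS t Ht). intros A HA; unfold cladd, clzero; ring.
  - apply IHn; auto.
Qed.

Lemma Pl_deriv a F : Pl a F -> exists F', (forall t, Rabs t < r -> Cderiv F F' t) /\
  ((forall t, Rabs t < r -> ceq (F' t) clzero) \/ (exists a', a = S a' /\ Pl a' F')).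
Proof.
  destruct a; intros [F' [HD HS]]; exists F'; split; auto. right; exists a; auto.
Qed.

Lemma Pl_mul n : forall a b F G, (a + b)%nat = n -> Pl a F -> Pl b G -> Pl n (fun t => clmul (F t) (G t)).
Proof.
  induction n; intros a b F G Hab HF HG;
  destruct (Pl_deriv a F HF) as [F' [HFD HFS]]; destruct (Pl_deriv b G HG) as [G' [HGD HGS]];
  exists (fun s => cladd (clmul (F' s) (G s)) (clmul (F s) (G' s))); (split; [intros; apply Cderiv_mul; auto|]).
  - destruct HFS as [HFS|[a' [Ha _]]]; [|lia]. destruct HGS as [HGS|[b' [Hb _]]]; [|lia].
    intros t Ht. rewrite (HFS t Ht), (HGS t Ht), clmul_0l, clmul_0r.
    intros A HA; unfold cladd, clzero; ring.
  - apply Pl_add.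
    + destruct HFS as [HFS|[a' [Ha HF']]].
      * apply (Pl_ext n (fun _ => clzero)). intros t Ht. rewrite (HFS t Ht), clmul_0l. reflexivity. apply Pl_zero.
      * apply (IHn a' b); auto. lia.
    + destruct HGS as [HGS|[b' [Hb HG']]].
      * apply (Pl_ext n (fun _ => clzero)). intros t Ht. rewrite (HGS t Ht), clmul_0r. reflexivity. apply Pl_zero.
      * apply (IHn a b'); auto. lia.
Qed.

Lemma Pl_chain n : forall F, Pl n F -> exists D : nat -> R -> Cl, D O = F /\
  (forall j t, (j <= n)%nat -> Rabs t < r -> Cderiv (D j) (D (S j)) t) /\
  (forall t, Rabs t < r -> ceq (D (S n) t) clzero).
Proof.
  induction n; intros F [F' [HD HS]].
  - exists (fun j => match j with O => F | _ => F' end). split; auto. split; auto.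
    intros j t Hj Ht. assert (j = O) by lia. subst. auto.
  - destruct (IHn _ HS) as [D' [HD0 [HD1 HD2]]].
    exists (fun j => match j with O => F | S j' => D' j' end). split; auto. split; auto.
    intros [|j] t Hj Ht. rewrite HD0. auto. apply HD1; auto; lia.
Qed.

End Classes.

Lemma real_chain (g : R -> R) (f : nat -> R -> R) r n :
  (forall t, Rabs t < r -> g t = f O t) ->
  (forall j t, (j < n)%nat -> Rabs t < r -> is_derive (f j) t (f (S j) t)) ->
  forall j, (j <= n)%nat -> forall t, Rabs t < r -> Derive_n g j t = f j t.
Proof.
  intros H0 HD. induction j; intros Hj t Ht. simpl; auto.
  simpl. rewrite (Derive_ext_loc _ (f j)).
  - apply is_derive_unique. apply HD; auto; lia.
  - eapply filter_imp; [|apply (inB_loc r t Ht)]. intros s Hs. apply IHj; auto; lia.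
Qed.

Lemma real_chain_ex (g : R -> R) (f : nat -> R -> R) r n :
  (forall t, Rabs t < r -> g t = f O t) ->
  (forall j t, (j < n)%nat -> Rabs t < r -> is_derive (f j) t (f (S j) t)) ->
  forall j, (j <= n)%nat -> forall t, Rabs t < r -> ex_derive_n g j t.
Proof.
  intros H0 HD [|j] Hj t Ht. simpl; auto.
  simpl. exists (f (S j) t). apply (is_derive_ext_loc (f j)).
  - eapply filter_imp; [|apply (inB_loc r t Ht)]. intros s Hs. symmetry. apply (real_chain g f r n); auto; lia.
  - apply HD; auto.
Qed.

Lemma real_chain_is (g : R -> R) (f : nat -> R -> R) r n :
  (forall t, Rabs t < r -> g t = f O t) ->
  (forall j t, (j < n)%nat -> Rabs t < r -> is_derive (f j) t (f (S j) t)) ->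
  forall j, (j < n)%nat -> forall t, Rabs t < r -> is_derive_n g (S j) t (f (S j) t).
Proof.
  intros H0 HD j Hj t Ht. simpl. apply (is_derive_ext_loc (f j)).
  - eapply filter_imp; [|apply (inB_loc r t Ht)]. intros s Hs. symmetry. apply (real_chain g f r n); auto; lia.
  - apply HD; auto.
Qed.

Lemma ser_ex (a M : nat -> R) : (forall p, Rabs (a p) <= M p) -> ex_series M -> ex_series a.
Proof. intros H HM. apply (ex_series_le a M); auto. Qed.

Lemma ser_cv (a M : nat -> R) : (forall p, Rabs (a p) <= M p) -> ex_series M ->
  Un_cv (fun N => sum_f_R0 a N) (Series a).
Proof.
  intros H HM. assert (Ha := ser_ex a M H HM).
  apply Series_correct in Ha. apply is_series_Reals in Ha. exact Ha.
Qed.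

Lemma ser_tail (a M : nat -> R) n : (forall p, Rabs (a p) <= M p) -> ex_series M ->
  Rabs (Series a - sum_f_R0 a n) <= Series M - sum_f_R0 M n.
Proof.
  intros H HM. assert (Ha := ser_ex a M H HM).
  rewrite (Series_incr_n a (S n)), (Series_incr_n M (S n)); auto; try lia. simpl pred.
  replace (sum_f_R0 a n + Series (fun k => a (S n + k)%nat) - sum_f_R0 a n) with (Series (fun k => a (S n + k)%nat)) by ring.
  replace (sum_f_R0 M n + Series (fun k => M (S n + k)%nat) - sum_f_R0 M n) with (Series (fun k => M (S n + k)%nat)) by ring.
  assert (HMt : ex_series (fun k => M (S n + k)%nat)) by (apply (ex_series_incr_n M (S n)); auto).
  assert (Hat : ex_series (fun k => Rabs (a (S n + k)%nat))).
  { apply (ser_ex _ (fun k => M (S n + k)%nat)); auto. intros k. rewrite Rabs_Rabsolu. auto. }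
  eapply Rle_trans. apply Series_Rabs; auto.
  apply Series_le; auto. intros k; split. apply Rabs_pos. auto.
Qed.

Lemma derivable_sum (f : nat -> R -> R) (df : nat -> R -> R) y N :
  (forall p, derivable_pt_lim (f p) y (df p y)) ->
  derivable_pt_lim (fun x => sum_f_R0 (fun p => f p x) N) y (sum_f_R0 (fun p => df p y) N).
Proof.
  intros H. induction N; simpl. auto.
  apply (derivable_pt_lim_plus (fun x => sum_f_R0 (fun p => f p x) N) (f (S N))); auto.
Qed.

Lemma termwise (r : R) (f : nat -> nat -> R -> R) (M : nat -> R) (n : nat) :
  0 < r -> ex_series M ->
  (forall p j t, (j < n)%nat -> Rabs t < r -> is_derive (f p j) t (f p (S j) t)) ->
  (forall p j t, (j <= n)%nat -> Rabs t < r -> Rabs (f p j t) <= M p) ->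
  forall j t, (S j < n)%nat -> Rabs t < r ->
  is_derive (fun s => Series (fun p => f p j s)) t (Series (fun p => f p (S j) t)).
Proof.
  intros Hr HM HD HB j t Hj Ht.
  set (rr := mkposreal r Hr).
  assert (HBo : forall y, Boule 0 rr y <-> Rabs y < r).
  { intros y. unfold Boule. simpl. rewrite Rminus_0_r. tauto. }
  assert (HCVU : CVU (fun N y => sum_f_R0 (fun p => f p (S j) y) N) (fun s => Series (fun p => f p (S j) s)) 0 rr).
  { intros eps Heps.
    assert (HM0 : forall p, Rabs (M p) <= M p).
    { intros p. assert (H0 := HB p O 0 ltac:(lia) ltac:(rewrite Rabs_R0; lra)).
      assert (0 <= M p) by (eapply Rle_trans; [apply Rabs_pos|eauto]). rewrite Rabs_right; lra. }
    assert (HMc := ser_cv M M HM0 HM).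
    destruct (HMc eps Heps) as [N HN]. exists N. intros m y Hm Hy.
    unfold Boule in Hy; simpl in Hy; rewrite ?Rminus_0_r in Hy.
    eapply Rle_lt_trans. apply (ser_tail _ M m); auto. intros p; apply HB; auto; lia.
    specialize (HN m Hm). unfold Rdist in HN.
    rewrite Rabs_minus_sym in HN. eapply Rle_lt_trans; [apply Rle_abs|]. auto. }
  apply is_derive_Reals.
  apply (derivable_pt_lim_CVU (fun N y => sum_f_R0 (fun p => f p j y) N) (fun N y => sum_f_R0 (fun p => f p (S j) y) N)
    (fun s => Series (fun p => f p j s)) (fun s => Series (fun p => f p (S j) s)) t 0 rr).
  - unfold Boule; simpl; rewrite ?Rminus_0_r; auto.
  - intros y N Hy. unfold Boule in Hy; simpl in Hy; rewrite ?Rminus_0_r in Hy. apply (derivable_sum (fun p => f p j) (fun p => f p (S j))). intros p. apply is_derive_Reals. apply HD; auto; lia.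
  - intros y Hy. unfold Boule in Hy; simpl in Hy; rewrite ?Rminus_0_r in Hy. apply (ser_cv _ M); auto. intros p; apply HB; auto; lia.
  - auto.
  - apply (CVU_continuity _ _ 0 rr HCVU).
    intros N y Hy. unfold Boule in Hy; simpl in Hy; rewrite ?Rminus_0_r in Hy.
    apply derivable_continuous_pt.
    exists (sum_f_R0 (fun p => f p (S (S j)) y) N).
    apply (derivable_sum (fun p => f p (S j)) (fun p => f p (S (S j)))). intros p. apply is_derive_Reals. apply HD; auto.
Qed.

Definition comb (omega : nat -> Para) (v : nat -> R) : Para :=
  fun j => rsum (fun i => v i * omega i j) 4.

Lemma lat_bound omega : lin_indep4 omega -> exists K, 0 < K /\
  forall v a, (a < 4)%nat -> Rabs (v a) <= K * pmax (comb omega v).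
Proof.
  intros Hli. destruct (MX.lattice_inverse omega Hli) as [N HN].
  set (S := rsum (fun a => rsum (fun j => Rabs (N j a)) 4) 4).
  assert (HS : 0 <= S) by (apply rsum_nonneg; intros; apply rsum_nonneg; intros; apply Rabs_pos).
  exists (1 + S). split. lra.
  intros v a Ha. rewrite (HN v a Ha).
  set (y := comb omega v).
  assert (Hy := pmax_nonneg y).
  eapply Rle_trans. apply rsum_abs.
  apply Rle_trans with (rsum (fun j => pmax y * Rabs (N j a)) 4).
  - apply rsum_le. intros j Hj. change (rsum (fun i => v i * omega i j) 4) with (y j). rewrite Rabs_mult.
    apply Rmult_le_compat_r. apply Rabs_pos. apply pmax_ge; auto.
  - rewrite rsum_scal. rewrite Rmult_comm. apply Rmult_le_compat_r; auto.
    assert (rsum (fun j => Rabs (N j a)) 4 <= S).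
    { unfold S. apply (rsum_elem (fun a => rsum (fun j => Rabs (N j a)) 4)); auto.
      intros; apply rsum_nonneg; intros; apply Rabs_pos. }
    lra.
Qed.

Definition knat (k : nat -> Z) : nat :=
  Z.to_nat (Z.max (Z.max (Z.abs (k 0%nat)) (Z.abs (k 1%nat))) (Z.max (Z.abs (k 2%nat)) (Z.abs (k 3%nat)))).

Lemma knat_ge k a : (a < 4)%nat -> (Z.abs (k a) <= Z.of_nat (knat k))%Z.
Proof. intros Ha. unfold knat. destruct a as [|[|[|[|]]]]; try lia. Qed.

Lemma knat_attained k : exists a, (a < 4)%nat /\ Z.abs (k a) = Z.of_nat (knat k).
Proof.
  unfold knat.
  destruct (Z.max_spec (Z.max (Z.abs (k 0%nat)) (Z.abs (k 1%nat))) (Z.max (Z.abs (k 2%nat)) (Z.abs (k 3%nat)))) as [[_ E]|[_ E]];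
  rewrite E.
  - destruct (Z.max_spec (Z.abs (k 2%nat)) (Z.abs (k 3%nat))) as [[_ E2]|[_ E2]]; rewrite E2.
    + exists 3%nat; split; [lia|]. lia.
    + exists 2%nat; split; [lia|]. lia.
  - destruct (Z.max_spec (Z.abs (k 0%nat)) (Z.abs (k 1%nat))) as [[_ E2]|[_ E2]]; rewrite E2.
    + exists 1%nat; split; [lia|]. lia.
    + exists 0%nat; split; [lia|]. lia.
Qed.

Lemma knat_pos k : (exists a, (a < 4)%nat /\ k a <> 0%Z) -> (1 <= knat k)%nat.
Proof. intros [a [Ha Hk]]. assert (H := knat_ge k a Ha). lia. Qed.

Lemma abs_e2k (e : bool) (k : Z) : IZR (Z.abs k) <= Rabs ((if e then 1 else 0) - 2 * IZR k).
Proof.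
  replace ((if e then 1 else 0) - 2 * IZR k) with (IZR ((if e then 1 else 0) - 2 * k)%Z)
    by (destruct e; rewrite minus_IZR, mult_IZR; simpl; ring).
  rewrite Rabs_Zabs. apply IZR_le. destruct e; lia.
Qed.

Lemma rsum_sum_f a n : rsum a (S n) = sum_f_R0 a n.
Proof. induction n. simpl; ring. change (rsum a (S (S n))) with (rsum a (S n) + a (S n)). rewrite IHn. reflexivity. Qed.

Lemma ex_series_bounded (a : nat -> R) B : (forall p, 0 <= a p) -> (forall P, rsum a P <= B) -> ex_series a.
Proof.
  intros Ha HB.
  destruct (ex_finite_lim_seq_incr (sum_n a) B) as [l Hl].
  - intros n. rewrite !sum_n_Reals. simpl. specialize (Ha (S n)). lra.
  - intros n. rewrite sum_n_Reals, <- rsum_sum_f. auto.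
  - exists l. exact Hl.
Qed.

Lemma rsum_swap (f : nat -> nat -> R) n m :
  rsum (fun i => rsum (fun j => f i j) m) n = rsum (fun j => rsum (fun i => f i j) n) m.
Proof.
  induction n; simpl.
  - induction m; simpl; lra.
  - rewrite IHn. rewrite <- rsum_plus. reflexivity.
Qed.

Lemma rsum_const c n : rsum (fun _ => c) n = INR n * c.
Proof. induction n; simpl rsum. simpl; ring. rewrite IHn, S_INR; ring. Qed.

Lemma ind_sum n L : (n < L)%nat -> rsum (fun b => if Nat.eqb b n then 1 else 0) L = 1.
Proof.
  induction L; intros H. lia. simpl rsum.
  destruct (Nat.eq_dec n L).
  - subst. rewrite Nat.eqb_refl.
    replace (rsum (fun b => if Nat.eqb b L then 1 else 0) L) with 0. ring.
    clear. assert (forall M, (M <= L)%nat -> 0 = rsum (fun b => if Nat.eqb b L then 1 else 0) M).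
    { induction M; intros; simpl. auto. rewrite <- IHM by lia.
      replace (Nat.eqb M L) with false by (symmetry; apply Nat.eqb_neq; lia). ring. }
    apply H; lia.
  - rewrite IHL by lia. replace (Nat.eqb L n) with false by (symmetry; apply Nat.eqb_neq; lia). ring.
Qed.

Lemma at_most_one (g : nat -> R) P : (forall p, g p = 0 \/ g p = 1) ->
  (forall p q, (p < P)%nat -> (q < P)%nat -> g p = 1 -> g q = 1 -> p = q) -> rsum g P <= 1.
Proof.
  intros H01. induction P; intros Hu; simpl. lra.
  destruct (H01 P) as [E|E]; rewrite E.
  - assert (rsum g P <= 1) by (apply IHP; intros; apply Hu; auto; lia). lra.
  - assert (rsum g P = 0).
    { clear IHP. assert (forall M, (M <= P)%nat -> rsum g M = 0).
      { induction M; intros HM; simpl. auto. rewrite IHM by lia.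
        destruct (H01 M) as [E'|E']. rewrite E'; ring.
        exfalso. assert (M = P) by (apply Hu; auto; lia). lia. }
      apply H; lia. }
    lra.
Qed.

Definition indb (b : bool) : R := if b then 1 else 0.
Lemma ind01 b : indb b = 0 \/ indb b = 1. Proof. destruct b; simpl; auto. Qed.

Section Count.
Variable k : nat -> nat -> Z.
Hypothesis Hnz : forall p, exists a, (a < 4)%nat /\ k p a <> 0%Z.
Hypothesis Hinj : forall p q, (forall a, (a < 4)%nat -> k p a = k q a) -> p = q.

Definition code (R0 : nat) (p a : nat) : nat := Z.to_nat (k p a + Z.of_nat R0).

Definition Ind (R0 p b0 b1 b2 b3 : nat) : R :=
  indb (knat (k p) <=? R0)%nat * indb (Nat.eqb b0 (code R0 p 0)) * indb (Nat.eqb b1 (code R0 p 1))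
   * indb (Nat.eqb b2 (code R0 p 2)) * indb (Nat.eqb b3 (code R0 p 3)).

Lemma Ind01 R0 p b0 b1 b2 b3 : Ind R0 p b0 b1 b2 b3 = 0 \/ Ind R0 p b0 b1 b2 b3 = 1.
Proof.
  unfold Ind. destruct (ind01 (knat (k p) <=? R0)%nat) as [E|E]; rewrite E; [left; ring|].
  destruct (ind01 (Nat.eqb b0 (code R0 p 0))) as [E0|E0]; rewrite E0; [left; ring|].
  destruct (ind01 (Nat.eqb b1 (code R0 p 1))) as [E1|E1]; rewrite E1; [left; ring|].
  destruct (ind01 (Nat.eqb b2 (code R0 p 2))) as [E2|E2]; rewrite E2; [left; ring|].
  destruct (ind01 (Nat.eqb b3 (code R0 p 3))) as [E3|E3]; rewrite E3; [left; ring|]. right; ring.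
Qed.

Lemma ind_eq1 b : indb b = 1 -> b = true. Proof. destruct b; simpl; auto. intros; lra. Qed.

Lemma Ind_one R0 p b0 b1 b2 b3 : Ind R0 p b0 b1 b2 b3 = 1 ->
  (knat (k p) <= R0)%nat /\ b0 = code R0 p 0 /\ b1 = code R0 p 1 /\ b2 = code R0 p 2 /\ b3 = code R0 p 3.
Proof.
  unfold Ind. intros H.
  destruct (ind01 (knat (k p) <=? R0)%nat) as [E|E]; rewrite E in H; [lra|].
  destruct (ind01 (Nat.eqb b0 (code R0 p 0))) as [E0|E0]; rewrite E0 in H; [lra|].
  destruct (ind01 (Nat.eqb b1 (code R0 p 1))) as [E1|E1]; rewrite E1 in H; [lra|].
  destruct (ind01 (Nat.eqb b2 (code R0 p 2))) as [E2|E2]; rewrite E2 in H; [lra|].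
  destruct (ind01 (Nat.eqb b3 (code R0 p 3))) as [E3|E3]; rewrite E3 in H; [lra|].
  apply ind_eq1 in E, E0, E1, E2, E3.
  apply Nat.leb_le in E. apply Nat.eqb_eq in E0, E1, E2, E3. auto.
Qed.

Lemma code_lt R0 p a : (a < 4)%nat -> (knat (k p) <= R0)%nat -> (code R0 p a < 2 * R0 + 1)%nat.
Proof. intros Ha H. assert (G := knat_ge (k p) a Ha). unfold code. lia. Qed.

Lemma code_inj R0 p q : (knat (k p) <= R0)%nat -> (knat (k q) <= R0)%nat ->
  (forall a, (a < 4)%nat -> code R0 p a = code R0 q a) -> p = q.
Proof.
  intros Hp Hq H. apply Hinj. intros a Ha. specialize (H a Ha).
  assert (G1 := knat_ge (k p) a Ha). assert (G2 := knat_ge (k q) a Ha). unfold code in H. lia.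
Qed.

Lemma count_box R0 P : rsum (fun p => indb (knat (k p) <=? R0)%nat) P <= INR (2 * R0 + 1) ^ 4.
Proof.
  set (L := (2 * R0 + 1)%nat).
  assert (E : forall p, indb (knat (k p) <=? R0)%nat =
     rsum (fun b0 => rsum (fun b1 => rsum (fun b2 => rsum (fun b3 => Ind R0 p b0 b1 b2 b3) L) L) L) L).
  { intros p. unfold Ind.
    destruct (Nat.leb_spec (knat (k p)) R0) as [Hk|Hk].
    - assert (C : forall a, (a < 4)%nat -> rsum (fun b => indb (Nat.eqb b (code R0 p a))) L = 1).
      { intros a Ha. apply ind_sum. apply code_lt; auto. }
      assert (R1 : forall X a, (a < 4)%nat -> rsum (fun b => X * indb (Nat.eqb b (code R0 p a))) L = X).
      { intros X a Ha. rewrite rsum_scal, C by auto. ring. }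
      symmetry.
      transitivity (rsum (fun b0 => rsum (fun b1 => rsum (fun b2 =>
          indb true * indb (Nat.eqb b0 (code R0 p 0)) * indb (Nat.eqb b1 (code R0 p 1)) * indb (Nat.eqb b2 (code R0 p 2))) L) L) L).
      { apply rsum_ext; intros b0 _; apply rsum_ext; intros b1 _; apply rsum_ext; intros b2 _. apply R1; lia. }
      transitivity (rsum (fun b0 => rsum (fun b1 =>
          indb true * indb (Nat.eqb b0 (code R0 p 0)) * indb (Nat.eqb b1 (code R0 p 1))) L) L).
      { apply rsum_ext; intros b0 _; apply rsum_ext; intros b1 _. apply R1; lia. }
      transitivity (rsum (fun b0 => indb true * indb (Nat.eqb b0 (code R0 p 0))) L).
      { apply rsum_ext; intros b0 _. apply R1; lia. }
      apply R1; lia.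
    - simpl indb at 1. 
      symmetry. transitivity (rsum (fun _ : nat => rsum (fun _ : nat => rsum (fun _ : nat => rsum (fun _ : nat => 0) L) L) L) L).
      + apply rsum_ext; intros; apply rsum_ext; intros; apply rsum_ext; intros; apply rsum_ext; intros. unfold indb at 1. ring.
      + rewrite !rsum_const. ring. }
  rewrite (rsum_ext _ _ P (fun p _ => E p)).
  rewrite rsum_swap.
  apply Rle_trans with (rsum (fun b0 => rsum (fun b1 => rsum (fun b2 => rsum (fun b3 => 1) L) L) L) L).
  - apply rsum_le; intros b0 _. rewrite rsum_swap.
    apply rsum_le; intros b1 _. rewrite rsum_swap.
    apply rsum_le; intros b2 _. rewrite rsum_swap.
    apply rsum_le; intros b3 _.
    apply at_most_one. intros; apply Ind01.
    intros p q _ _ Hp Hq. apply Ind_one in Hp. apply Ind_one in Hq.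
    destruct Hp as [Hp [E0 [E1 [E2 E3]]]]. destruct Hq as [Hq [F0 [F1 [F2 F3]]]].
    apply (code_inj R0); auto. intros a Ha. destruct a as [|[|[|[|]]]]; try lia.
  - rewrite !rsum_const. simpl. lra.
Qed.

Definition lterm (j : nat) : R := 32 / INR (2 ^ j) ^ 5.

Lemma pow2_pos j : 0 < INR (2 ^ j).
Proof. apply lt_0_INR. apply Nat.neq_0_lt_0. apply Nat.pow_nonzero. lia. Qed.

Lemma lterm_nonneg j : 0 <= lterm j.
Proof.
  unfold lterm. assert (H := pow2_pos j).
  apply Rmult_le_pos. lra. apply Rlt_le, Rinv_0_lt_compat, pow_lt; auto.
Qed.

Lemma layer n J : (1 <= n)%nat -> (n <= 2 ^ J)%nat ->
  1 / INR n ^ 5 <= rsum (fun j => indb (n <=? 2 ^ j)%nat * lterm j) (S J).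
Proof.
  intros Hn HJ.
  set (j0 := Nat.log2_up n).
  assert (Hj0 : (j0 <= J)%nat) by (apply Nat.log2_up_le_pow2; auto; lia).
  assert (H1 : (n <= 2 ^ j0)%nat /\ (2 ^ j0 <= 2 * n)%nat).
  { destruct (Nat.eq_dec n 1).
    - subst. unfold j0. simpl. lia.
    - destruct (Nat.log2_up_spec n) as [A B]; [lia|]. fold j0 in A, B. split; auto.
      destruct j0 as [|j1]. simpl in *. lia. simpl in A. rewrite Nat.pow_succ_r'. lia. }
  destruct H1 as [H1 H2].
  eapply Rle_trans; [|apply (rsum_elem (fun j => indb (n <=? 2 ^ j)%nat * lterm j) (S J) j0)].
  - replace (n <=? 2 ^ j0)%nat with true by (symmetry; apply Nat.leb_le; auto).
    simpl indb. rewrite Rmult_1_l. unfold lterm.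
    assert (Hx := pow2_pos j0). apply le_INR in H2. apply le_INR in Hn.
    rewrite mult_INR in H2. simpl (INR 2) in H2. simpl (INR 1) in Hn.
    set (x := INR (2 ^ j0)) in *. set (y := INR n) in *.
    unfold Rdiv. rewrite !Rmult_1_l.
    apply Rle_trans with (32 * / (32 * y ^ 5)).
    + right. field. lra.
    + apply Rmult_le_compat_l. lra. apply Rinv_le_contravar. apply pow_lt; lra.
      replace (32 * y ^ 5) with ((2 * y) ^ 5) by ring. apply pow_incr. lra.
  - lia.
  - intros j _. apply Rmult_le_pos. destruct (n <=? 2 ^ j)%nat; simpl; lra. apply lterm_nonneg.
Qed.

Fixpoint nmax (P : nat) : nat := match P with O => O | S P' => Nat.max (nmax P') (knat (k P')) end.
Lemma nmax_ge P p : (p < P)%nat -> (knat (k p) <= nmax P)%nat.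
Proof. induction P; intros H; simpl. lia. destruct (Nat.eq_dec p P). subst; lia. assert (p < P)%nat by lia. specialize (IHP H0). lia. Qed.

Lemma geom n : rsum (fun j => (/ 2) ^ j) n = 2 - 2 * (/ 2) ^ n.
Proof. induction n; simpl rsum. simpl; ring. rewrite IHn. simpl. field. Qed.

Lemma count_bound P : rsum (fun p => 1 / INR (knat (k p)) ^ 5) P <= 16384.
Proof.
  set (J := nmax P).
  apply Rle_trans with (rsum (fun p => rsum (fun j => indb (knat (k p) <=? 2 ^ j)%nat * lterm j) (S J)) P).
  { apply rsum_le. intros p Hp. apply layer.
    - apply knat_pos; auto.
    - assert (H := nmax_ge P p Hp). assert (J < 2 ^ J)%nat by (apply Nat.pow_gt_lin_r; lia). fold J in H. lia. }
  rewrite rsum_swap.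
  apply Rle_trans with (rsum (fun j => lterm j * INR (2 * 2 ^ j + 1) ^ 4) (S J)).
  { apply rsum_le. intros j _.
    rewrite (rsum_ext _ (fun p => lterm j * indb (knat (k p) <=? 2 ^ j)%nat)) by (intros; ring).
    rewrite rsum_scal. apply Rmult_le_compat_l. apply lterm_nonneg. apply count_box. }
  apply Rle_trans with (rsum (fun j => 8192 * (/ 2) ^ j) (S J)).
  { apply rsum_le. intros j _. unfold lterm.
    rewrite plus_INR, mult_INR. simpl (INR 2). simpl (INR 1).
    rewrite pow_INR. simpl (INR 2).
    assert (Hx : 1 <= 2 ^ j) by (apply pow_R1_Rle; lra).
    rewrite <- Rinv_pow by lra.
    set (x := 2 ^ j) in *.
    apply Rle_trans with (32 / x ^ 5 * (4 * x) ^ 4).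
    - apply Rmult_le_compat_l. unfold Rdiv. apply Rmult_le_pos. lra. apply Rlt_le, Rinv_0_lt_compat, pow_lt; lra.
      apply pow_incr. replace (1+1) with 2 by ring. fold x. lra.
    - right. field. lra. }
  rewrite rsum_scal, geom.
  assert (0 <= (/ 2) ^ S J) by (apply pow_le; lra). lra.
Qed.
End Count.

Lemma ind_sum_c n L X : (n < L)%nat -> rsum (fun b => indb (Nat.eqb b n) * X) L = X.
Proof.
  intros H. rewrite (rsum_ext _ (fun b => X * (if Nat.eqb b n then 1 else 0))) by (intros; unfold indb; ring).
  rewrite rsum_scal, ind_sum; auto. ring.
Qed.

Lemma ind_sum_ge n L X : (L <= n)%nat -> rsum (fun b => indb (Nat.eqb b n) * X) L = 0.
Proof.
  induction L; intros H; simpl. auto. rewrite IHL by lia.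
  replace (Nat.eqb L n) with false by (symmetry; apply Nat.eqb_neq; lia). simpl; ring.
Qed.

Section Invol.
Variable a : nat -> R.
Variable sigma : nat -> nat.
Hypothesis Hss : forall n, sigma (sigma n) = n.
Hypothesis Has : forall n, a (sigma n) = - a n.

Fixpoint smax (N : nat) : nat := match N with O => O | S N' => Nat.max (smax N') (S (sigma N')) end.
Lemma smax_ge N n : (n < N)%nat -> (sigma n < smax N)%nat.
Proof. induction N; intros H; simpl. lia. destruct (Nat.eq_dec n N). subst; lia. assert (n < N)%nat by lia. specialize (IHN H0). lia. Qed.

Definition Fb (N n : nat) : bool := orb (Nat.ltb n N) (Nat.ltb (sigma n) N).

Lemma Fb_sigma N n : Fb N (sigma n) = Fb N n.
Proof. unfold Fb. rewrite Hss. apply orb_comm. Qed.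

Lemma pair_zero N M : (N <= M)%nat -> (smax N <= M)%nat ->
  rsum (fun n => indb (Fb N n) * a n) M = 0.
Proof.
  intros HN HM.
  assert (Hc : forall n, Fb N n = true -> (sigma n < M)%nat).
  { intros n Hn. unfold Fb in Hn. apply orb_true_iff in Hn. destruct Hn as [Hn|Hn]; apply Nat.ltb_lt in Hn.
    - assert (H := smax_ge N n Hn). lia.
    - lia. }
  set (Z := rsum (fun n => indb (Fb N n) * a n) M).
  assert (E1 : Z = rsum (fun n => rsum (fun m => indb (Nat.eqb m (sigma n)) * (indb (Fb N n) * a n)) M) M).
  { unfold Z. apply rsum_ext. intros n Hn. destruct (Fb N n) eqn:E.
    - rewrite ind_sum_c; auto.
    - simpl indb. rewrite (rsum_ext _ (fun _ => 0)) by (intros; ring). rewrite rsum_const; ring. }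
  rewrite rsum_swap in E1.
  assert (E2 : forall m, (m < M)%nat -> rsum (fun n => indb (Nat.eqb m (sigma n)) * (indb (Fb N n) * a n)) M = - (indb (Fb N m) * a m)).
  { intros m Hm.
    rewrite (rsum_ext _ (fun n => indb (Nat.eqb n (sigma m)) * (indb (Fb N (sigma m)) * a (sigma m)))).
    - destruct (Fb N m) eqn:E.
      + rewrite ind_sum_c. rewrite Fb_sigma, E, Has; ring. apply Hc; auto.
      + rewrite (rsum_ext _ (fun _ => 0)). rewrite rsum_const. simpl indb; ring.
        intros n _. rewrite Fb_sigma, E. simpl indb; ring.
    - intros n Hn. destruct (Nat.eq_dec n (sigma m)).
      + subst. rewrite Nat.eqb_refl, Hss, Nat.eqb_refl. reflexivity.
      + replace (Nat.eqb n (sigma m)) with false by (symmetry; apply Nat.eqb_neq; auto).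
        replace (Nat.eqb m (sigma n)) with false. simpl indb; ring.
        symmetry; apply Nat.eqb_neq. intros E. apply n0. rewrite E, Hss. auto. }
  rewrite (rsum_ext _ _ M E2) in E1.
  rewrite (rsum_ext _ (fun m => -1 * (indb (Fb N m) * a m))) in E1 by (intros; ring).
  rewrite rsum_scal in E1. fold Z in E1. lra.
Qed.

Lemma rsum_tail (f : nat -> R) N M : (N <= M)%nat ->
  rsum (fun n => indb (N <=? n)%nat * f n) M = rsum f M - rsum f N.
Proof.
  intros H. induction H.
  - assert (forall K, (K <= N)%nat -> rsum (fun n => indb (N <=? n)%nat * f n) K = 0).
    { induction K; intros HK; simpl. auto. rewrite IHK by lia.
      replace (N <=? K)%nat with false by (symmetry; apply Nat.leb_gt; lia). simpl; ring. }
    rewrite H; auto. ring.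
  - simpl. rewrite IHle. replace (N <=? m)%nat with true by (symmetry; apply Nat.leb_le; lia). simpl; ring.
Qed.

Lemma invol_sum : ex_series (fun n => Rabs (a n)) -> Series a = 0.
Proof.
  intros Hab.
  assert (Hcv := ser_cv a (fun n => Rabs (a n)) (fun n => Rle_refl _) Hab).
  assert (Hcva := ser_cv (fun n => Rabs (a n)) (fun n => Rabs (a n)) (fun n => Req_le _ _ (Rabs_Rabsolu (a n))) Hab).
  set (Sa := Series a) in *. set (SA := Series (fun n => Rabs (a n))) in *.
  assert (Hsmall : forall eps, 0 < eps -> Rabs Sa <= 4 * eps).
  { intros eps Heps.
    destruct (Hcva eps Heps) as [N0 HN0].
    set (N := S N0).
    set (M0 := Nat.max N (smax N)).
    destruct (Hcv eps Heps) as [N1 HN1].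
    set (M := S (Nat.max M0 N1)).
    assert (HM : (N <= M)%nat /\ (smax N <= M)%nat) by (unfold M, M0; lia).
    assert (Hsplit : rsum a M = rsum (fun n => indb (Fb N n) * a n) M + rsum (fun n => (1 - indb (Fb N n)) * a n) M).
    { rewrite <- rsum_plus. apply rsum_ext. intros; ring. }
    rewrite pair_zero in Hsplit by (destruct HM; auto).
    assert (Hrest : Rabs (rsum (fun n => (1 - indb (Fb N n)) * a n) M) <= rsum (fun n => Rabs (a n)) M - rsum (fun n => Rabs (a n)) N).
    { rewrite <- rsum_tail by (destruct HM; auto).
      eapply Rle_trans. apply rsum_abs. apply rsum_le. intros n Hn.
      rewrite Rabs_mult. unfold Fb. destruct (Nat.ltb_spec n N).
      - replace (N <=? n)%nat with false by (symmetry; apply Nat.leb_gt; lia).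
        cbn [orb indb]. rewrite Rminus_diag, Rabs_R0. apply Req_le; ring.
      - replace (N <=? n)%nat with true by (symmetry; apply Nat.leb_le; lia). cbn [orb].
        destruct (sigma n <? N)%nat; cbn [indb].
        + rewrite Rminus_diag, Rabs_R0. assert (0 <= Rabs (a n)) by apply Rabs_pos. lra.
        + rewrite Rminus_0_r, Rabs_R1. lra. }
    assert (E1 := HN0 (pred M) ltac:(unfold M; lia)).
    assert (E2 := HN0 N0 ltac:(lia)).
    assert (E3 := HN1 (pred M) ltac:(unfold M; lia)).
    unfold Rdist in E1, E2, E3.
    rewrite <- !rsum_sum_f in E1, E2, E3.
    replace (S (pred M)) with M in E1, E3 by (unfold M; lia).
    fold N in E2.
    rewrite Hsplit, Rplus_0_l in E3.
    assert (HA : Rabs (rsum (fun n => Rabs (a n)) M - SA) < eps) by auto.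
    assert (HB : Rabs (rsum (fun n => Rabs (a n)) N - SA) < eps) by auto.
    apply Rabs_def2 in HA. apply Rabs_def2 in HB.
    rewrite Rabs_minus_sym in E3.
    assert (Rabs Sa <= Rabs (Sa - rsum (fun n => (1 - indb (Fb N n)) * a n) M) + Rabs (rsum (fun n => (1 - indb (Fb N n)) * a n) M)).
    { replace Sa with ((Sa - rsum (fun n => (1 - indb (Fb N n)) * a n) M) + rsum (fun n => (1 - indb (Fb N n)) * a n) M) at 1 by ring.
      apply Rabs_triang. }
    destruct HA, HB. lra. }
  destruct (Req_dec Sa 0) as [E|E]; auto. exfalso.
  assert (Hp : 0 < Rabs Sa) by (apply Rabs_pos_lt; auto).
  specialize (Hsmall (Rabs Sa / 8) ltac:(lra)). lra.
Qed.
End Invol.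

Definition Af (h v : Para) (t : R) : Cl := para (pinv (psub (shift0 h t) v)).

Lemma Af_deriv h v t : pnorm2 (psub (shift0 h t) v) <> 0 ->
  Cderiv (Af h v) (fun s => clopp (clmul (Af h v s) (Af h v s))) t.
Proof.
  intros Hn C HC. unfold clopp.
  do 8 (destruct C as [|C]; [ clm; unfold Af, para, pinv, psub, shift0 in *; unfold pnorm2 in *; simpl in *;
     auto_derive; unfold Rminus in *; try (field; (auto || (intro E; apply Hn; rewrite <- E; ring)); fail); auto | ]); lia.
Qed.

Lemma X_deriv h t : Cderiv (fun s => para (shift0 h s)) (fun _ => clone) t.
Proof.
  intros C HC.
  do 8 (destruct C as [|C]; [ unfold para, shift0, clone; simpl; auto_derive; auto; ring | ]); lia.
Qed.

Lemma B_deriv h v t : Cderiv (fun s => clmul (para (shift0 h s)) (para (pinv v))) (fun _ => para (pinv v)) t.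
Proof.
  eapply Cderiv_val. apply (Cderiv_mul (fun s => para (shift0 h s)) (fun _ => clone) (fun _ => para (pinv v)) (fun _ => clzero)).
  apply X_deriv. apply Cderiv_const.
  simpl. rewrite clmul_1l, clmul_0r. intros C HC; unfold cladd, clzero; ring.
Qed.

Lemma L_deriv h v t : Cderiv (fun s => clmul (para (pinv v)) (para (shift0 h s))) (fun _ => clmul (para (pinv v)) clone) t.
Proof.
  eapply Cderiv_val. apply (Cderiv_mul (fun _ => para (pinv v)) (fun _ => clzero) (fun s => para (shift0 h s)) (fun _ => clone)).
  apply Cderiv_const. apply X_deriv.
  simpl. rewrite clmul_0l. intros C HC; unfold cladd, clzero; ring.
Qed.

Lemma pmax_peq y y' : peq y y' -> pmax y = pmax y'.
Proof. intros H. unfold pmax. rewrite !H by lia. reflexivity. Qed.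

Lemma pmax_le y B : (forall j, (j < 4)%nat -> Rabs (y j) <= B) -> pmax y <= B.
Proof.
  intros H. unfold pmax. apply Rmax_lub; apply Rmax_lub; apply H; lia.
Qed.

Lemma pmax_shift_sub h v t : pmax (psub h v) <= pmax (psub (shift0 h t) v) + Rabs t.
Proof.
  apply pmax_le. intros j Hj.
  assert (G := pmax_ge (psub (shift0 h t) v) j Hj). assert (Ht := Rabs_pos t).
  unfold psub, shift0 in *. destruct (Nat.eqb_spec j 0).
  - subst. replace (h 0%nat - v 0%nat) with ((h 0%nat + t - v 0%nat) + - t) by ring.
    eapply Rle_trans. apply Rabs_triang. rewrite Rabs_Ropp. lra.
  - lra.
Qed.

Lemma pmax_shift h t : pmax (shift0 h t) <= pmax h + Rabs t.
Proof.
  apply pmax_le. intros j Hj.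
  assert (G := pmax_ge h j Hj). assert (Ht := Rabs_pos t).
  unfold shift0. destruct (Nat.eqb_spec j 0).
  - eapply Rle_trans. apply Rabs_triang. lra.
  - lra.
Qed.

Lemma pnorm2_pos y : 0 < pmax y -> pnorm2 y <> 0.
Proof. intros H. assert (G := pmax_sq y). nra. Qed.

Lemma psub_zero y : psub y pzero = y.
Proof. unfold psub, pzero. apply functional_extensionality. intros; ring. Qed.

Lemma chain_Dn (F : R -> Cl) (D : nat -> R -> Cl) r n A : D O = F ->
  (forall j t, (j < n)%nat -> Rabs t < r -> Cderiv (D j) (D (S j)) t) -> (A < 8)%nat ->
  forall j t, (j <= n)%nat -> Rabs t < r -> Derive_n (fun s => F s A) j t = D j t A.
Proof.
  intros H0 HD HA j t Hj Ht. apply (real_chain _ (fun j s => D j s A) r n); auto.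
  intros; rewrite H0; auto. intros; apply HD; auto.
Qed.

Lemma chain_is (F : R -> Cl) (D : nat -> R -> Cl) r n A : D O = F ->
  (forall j t, (j < n)%nat -> Rabs t < r -> Cderiv (D j) (D (S j)) t) -> (A < 8)%nat ->
  forall j t, (j < n)%nat -> Rabs t < r ->
  is_derive (Derive_n (fun s => F s A) j) t (Derive_n (fun s => F s A) (S j) t).
Proof.
  intros H0 HD HA j t Hj Ht.
  rewrite (chain_Dn F D r n A) by (auto; lia).
  apply (real_chain_is _ (fun j s => D j s A) r n); auto.
  intros; rewrite H0; auto. intros; apply HD; auto.
Qed.

Lemma chain_ex (F : R -> Cl) (D : nat -> R -> Cl) r n A : D O = F ->
  (forall j t, (j < n)%nat -> Rabs t < r -> Cderiv (D j) (D (S j)) t) -> (A < 8)%nat ->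
  forall j t, (j <= n)%nat -> Rabs t < r -> ex_derive_n (fun s => F s A) j t.
Proof.
  intros H0 HD HA j t Hj Ht.
  apply (real_chain_ex _ (fun j s => D j s A) r n); auto.
  intros; rewrite H0; auto. intros; apply HD; auto.
Qed.

Section Main.
Variable omega : nat -> Para.
Variable w : nat -> Para.
Hypothesis Hen : enumerates_L0 omega w.
Variable eps : nat -> bool.
Hypothesis Heps : exists a, (a < 4)%nat /\ eps a = true.
Variable K : R.
Hypothesis HK0 : 0 < K.
Hypothesis HKb : forall v a, (a < 4)%nat -> Rabs (v a) <= K * pmax (comb omega v).

Definition h := halfper omega eps.
Definition e (a : nat) : R := if eps a then 1 else 0.

Lemma h_comb j : h j = comb omega e j.
Proof. unfold h, halfper, comb, e. apply rsum_ext. intros i _. destruct (eps i); ring. Qed.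

Definition kk (p : nat) : nat -> Z := proj1_sig (constructive_indefinite_description _ (proj1 (proj1 Hen p))).
Lemma kk_spec p : forall j, (j < 4)%nat -> w p j = rsum (fun a => 2 * IZR (kk p a) * omega a j) 4.
Proof. unfold kk. destruct (constructive_indefinite_description _ _) as [k Hk]. simpl. auto. Qed.

Lemma w_comb p j : (j < 4)%nat -> w p j = comb omega (fun a => 2 * IZR (kk p a)) j.
Proof. intros Hj. rewrite kk_spec by auto. unfold comb. apply rsum_ext. intros; ring. Qed.

Lemma kk_nz p : exists a, (a < 4)%nat /\ kk p a <> 0%Z.
Proof.
  destruct (Z.eq_dec (kk p 0%nat) 0) as [E0|E0]; [|exists 0%nat; split; auto; lia].
  destruct (Z.eq_dec (kk p 1%nat) 0) as [E1|E1]; [|exists 1%nat; split; auto; lia].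
  destruct (Z.eq_dec (kk p 2%nat) 0) as [E2|E2]; [|exists 2%nat; split; auto; lia].
  destruct (Z.eq_dec (kk p 3%nat) 0) as [E3|E3]; [|exists 3%nat; split; auto; lia].
  exfalso. apply (proj2 (proj1 Hen p)). intros j Hj. rewrite kk_spec by auto.
  simpl. rewrite E0, E1, E2, E3. unfold pzero. ring.
Qed.

Lemma kk_inj p q : (forall a, (a < 4)%nat -> kk p a = kk q a) -> p = q.
Proof.
  intros H. apply (proj1 (proj2 Hen)). intros j Hj. rewrite !kk_spec by auto.
  apply rsum_ext. intros a Ha. rewrite H; auto.
Qed.

Definition kap (p : nat) : R := INR (knat (kk p)).
Lemma kap_ge1 p : 1 <= kap p.
Proof. unfold kap. apply (le_INR 1). apply knat_pos. apply kk_nz. Qed.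

Lemma low_h : 1 <= K * pmax h.
Proof.
  destruct Heps as [a [Ha Ea]].
  assert (G := HKb e a Ha). unfold e in G at 1. rewrite Ea, Rabs_R1 in G.
  rewrite (pmax_peq h (comb omega e)); auto. intros j _; apply h_comb.
Qed.

Lemma sub_comb p : peq (psub h (w p)) (comb omega (fun a => e a - 2 * IZR (kk p a))).
Proof.
  intros j Hj. unfold psub. rewrite h_comb, w_comb by auto. unfold comb.
  simpl. ring.
Qed.

Lemma low_hw p : kap p <= K * pmax (psub h (w p)).
Proof.
  destruct (knat_attained (kk p)) as [a [Ha Ea]].
  assert (G := HKb (fun a => e a - 2 * IZR (kk p a)) a Ha). simpl in G.
  rewrite <- (pmax_peq _ _ (sub_comb p)) in G.
  eapply Rle_trans; [|exact G]. unfold kap, e.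
  rewrite INR_IZR_INZ, <- Ea. apply abs_e2k.
Qed.

Lemma low_w p : kap p <= K * pmax (w p).
Proof.
  destruct (knat_attained (kk p)) as [a [Ha Ea]].
  assert (G := HKb (fun a => 2 * IZR (kk p a)) a Ha). simpl in G.
  rewrite <- (pmax_peq (w p)) in G by (intros j Hj; apply w_comb; auto).
  eapply Rle_trans; [|exact G]. unfold kap.
  rewrite INR_IZR_INZ, <- Ea, Rabs_mult, (Rabs_right 2) by lra. rewrite Rabs_Zabs.
  assert (0 <= IZR (Z.abs (kk p a))) by (apply IZR_le; lia). lra.
Qed.


Definition r0 := / (2 * K).
Definition xh (t : R) := shift0 h t.
Definition lam := 2 ^ 5 * (8 * K) + 1.
Definition Hh := pmax h + r0.

Lemma r0_pos : 0 < r0.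
Proof. unfold r0. apply Rinv_0_lt_compat. lra. Qed.
Lemma Kr0 : K * r0 = / 2.
Proof. unfold r0. field. lra. Qed.
Lemma lam_ge1 : 1 <= lam.
Proof. unfold lam. simpl. lra. Qed.

Lemma ball_w p t : Rabs t < r0 -> kap p / (2 * K) <= pmax (psub (xh t) (w p)).
Proof.
  intros Ht. assert (G1 := low_hw p). assert (G2 := pmax_shift_sub h (w p) t).
  assert (G3 := kap_ge1 p). assert (E := Kr0). fold (xh t) in G2.
  set (P := pmax (psub (xh t) (w p))) in *.
  assert (K * Rabs t < / 2) by (rewrite <- E; apply Rmult_lt_compat_l; auto).
  assert (K * P + K * Rabs t = K * (P + Rabs t)) by ring.
  assert (kap p <= K * (P + Rabs t)) by (eapply Rle_trans; [exact G1| apply Rmult_le_compat_l; lra]).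
  assert (kap p <= 2 * K * P) by lra.
  apply (Rmult_le_reg_l (2 * K)). lra. unfold Rdiv. rewrite <- Rmult_assoc, (Rmult_comm (2*K)), Rmult_assoc, Rinv_r, Rmult_1_r by lra. lra.
Qed.

Lemma ball_h t : Rabs t < r0 -> / (2 * K) <= pmax (psub (xh t) pzero).
Proof.
  intros Ht. assert (G1 := low_h). assert (G2 := pmax_shift_sub h pzero t).
  rewrite !psub_zero in *. fold (xh t) in G2. assert (E := Kr0).
  set (P := pmax (xh t)) in *.
  assert (K * Rabs t < / 2) by (rewrite <- E; apply Rmult_lt_compat_l; auto).
  assert (1 <= 2 * K * P) by nra.
  apply (Rmult_le_reg_l (2 * K)). lra. rewrite Rinv_r by lra. lra.
Qed.

Lemma xh_bound t : Rabs t < r0 -> pmax (xh t) <= Hh.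
Proof. intros Ht. unfold Hh, xh. assert (G := pmax_shift h t). lra. Qed.

Lemma Af_Sm v d : 0 < d -> (forall t, Rabs t < r0 -> d <= pmax (psub (xh t) v)) -> 2 ^ 5 * (4 / d) <= lam ->
  Sm r0 lam 5 (4 / d) (Af h v).
Proof.
  intros Hd Hb Hl.
  assert (Hlam : 0 <= lam) by (generalize lam_ge1; lra).
  apply (Sm_inv r0 lam r0_pos Hlam).
  - unfold Rdiv. apply Rmult_le_pos. lra. apply Rlt_le, Rinv_0_lt_compat; auto.
  - auto.
  - intros t Ht. unfold Af. specialize (Hb t Ht). unfold xh in Hb. eapply Rle_trans. apply cnorm_para_pinv. lra.
    apply Rmult_le_compat_l. lra. apply Rinv_le_contravar; auto.
  - intros t Ht. apply Af_deriv. apply pnorm2_pos. specialize (Hb t Ht). unfold xh in Hb. lra.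
Qed.

Lemma Hlam0 : 0 <= lam.
Proof. generalize lam_ge1; lra. Qed.

Lemma pw_pos p : kap p / K <= pmax (w p).
Proof.
  assert (G := low_w p). apply (Rmult_le_reg_l K). lra.
  unfold Rdiv. rewrite <- Rmult_assoc, (Rmult_comm K), Rmult_assoc, Rinv_r, Rmult_1_r by lra. lra.
Qed.

Lemma pinvw_bound p : cnorm (para (pinv (w p))) <= 4 * K / kap p.
Proof.
  assert (G := pw_pos p). assert (G1 := kap_ge1 p).
  assert (0 < kap p / K) by (unfold Rdiv; apply Rmult_lt_0_compat; [lra| apply Rinv_0_lt_compat; lra]).
  eapply Rle_trans. apply cnorm_para_pinv. lra.
  replace (4 * K / kap p) with (4 / (kap p / K)) by (field; lra).
  apply Rmult_le_compat_l. lra. apply Rinv_le_contravar; auto.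
Qed.

Definition Bf (p : nat) (t : R) : Cl := clmul (para (xh t)) (para (pinv (w p))).
Definition bp (p : nat) : R := (16 * Hh + 4) * K / kap p.

Lemma Hh_pos : 0 <= Hh.
Proof. unfold Hh. assert (G := pmax_nonneg h). assert (G2 := r0_pos). lra. Qed.

Lemma Bf_Sm p : Sm r0 lam 5 (bp p) (Bf p).
Proof.
  assert (G1 := kap_ge1 p). assert (G2 := pinvw_bound p). assert (G3 := Hh_pos).
  assert (Hk : 0 <= K / kap p) by (unfold Rdiv; apply Rmult_le_pos; [lra| apply Rlt_le, Rinv_0_lt_compat; lra]).
  apply (Sm_affine r0 lam Hlam0 5 (bp p) (Bf p) (para (pinv (w p)))).
  - intros t Ht. unfold Bf. eapply Rle_trans. apply cnorm_mul.
    assert (G4 := cnorm_para (xh t)). assert (G5 := xh_bound t Ht).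
    assert (G6 := cnorm_nonneg (para (xh t))). assert (G7 := cnorm_nonneg (para (pinv (w p)))).
    apply Rle_trans with ((4 * Hh) * (4 * K / kap p)).
    + apply Rmult_le_compat; auto. lra.
    + unfold bp. unfold Rdiv in *. nra.
  - intros t Ht. unfold Bf, xh. apply B_deriv.
  - assert (G8 := lam_ge1). unfold bp. unfold Rdiv in *.
    assert (4 * K * / kap p <= (16 * Hh + 4) * K * / kap p) by nra.
    assert (0 <= (16 * Hh + 4) * K * / kap p) by nra. nra.
Qed.

Lemma Af_w_Sm p : Sm r0 lam 5 (8 * K / kap p) (Af h (w p)).
Proof.
  assert (G1 := kap_ge1 p).
  replace (8 * K / kap p) with (4 / (kap p / (2 * K))) by (field; lra).
  apply Af_Sm.
  * unfold Rdiv; apply Rmult_lt_0_compat; [lra| apply Rinv_0_lt_compat; lra].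
  * intros; apply ball_w; auto.
  * replace (4 / (kap p / (2 * K))) with (8 * K / kap p) by (field; lra).
    unfold lam. assert (8 * K / kap p <= 8 * K).
    { unfold Rdiv. rewrite <- (Rmult_1_r (8 * K)) at 2. apply Rmult_le_compat_l. lra.
      rewrite <- Rinv_1. apply Rinv_le_contravar; lra. }
    simpl. lra.
Qed.

Lemma Af_0_Sm : Sm r0 lam 5 (8 * K) (Af h pzero).
Proof.
  replace (8 * K) with (4 / / (2 * K)) by (field; lra).
  apply Af_Sm.
  * apply Rinv_0_lt_compat; lra.
  * intros; apply ball_h; auto.
  * replace (4 / / (2 * K)) with (8 * K) by (field; lra). unfold lam. simpl. lra.
Qed.

Definition MT (p : nat) : R := 2 ^ 5 * (8 * K / kap p) * (2 ^ 5 * bp p) ^ 4.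

Lemma zterm_Sm p : Sm r0 lam 5 (MT p) (fun t => zterm (w p) (xh t)).
Proof.
  assert (G1 := kap_ge1 p).
  apply (Sm_ext r0 lam 5 _ (fun t => clmul (Af h (w p) t) (clpow (Bf p t) 4))).
  - intros t Ht. unfold Af, Bf. symmetry. apply zterm_identity.
    + apply pnorm2_pos. assert (G := pw_pos p). assert (0 < kap p / K) by (unfold Rdiv; apply Rmult_lt_0_compat; [lra| apply Rinv_0_lt_compat; lra]). lra.
    + apply pnorm2_pos. assert (G := ball_w p t Ht). fold (xh t).
      assert (0 < kap p / (2 * K)) by (unfold Rdiv; apply Rmult_lt_0_compat; [lra| apply Rinv_0_lt_compat; lra]). lra.
  - unfold MT. apply (Sm_mul r0 lam r0_pos).
    + apply Af_w_Sm.
    + apply (Sm_pow r0 lam r0_pos Hlam0). apply Bf_Sm.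
Qed.

Definition Qf (p : nat) (t : R) : Cl :=
  clsum (fun mu => clmul (clpow (clmul (para (pinv (w p))) (para (xh t))) mu) (para (pinv (w p)))) 4.

Lemma Pl_sum r k (f : nat -> R -> Cl) n : (forall m, (m < n)%nat -> Pl r k (f m)) ->
  Pl r k (fun t => clsum (fun m => f m t) n).
Proof.
  induction n; intros H; simpl.
  - apply Pl_const.
  - apply (Pl_add r k (fun t => clsum (fun m => f m t) n) (f n)); auto.
Qed.

Lemma Qf_Pl p : Pl r0 3 (Qf p).
Proof.
  set (L := fun t => clmul (para (pinv (w p))) (para (xh t))).
  assert (HL : Pl r0 1 L).
  { exists (fun _ => clmul (para (pinv (w p))) clone). split.
    - intros t Ht. unfold L, xh. apply L_deriv.
    - apply Pl_const. }
  assert (HP : forall m, Pl r0 m (fun t => clpow (L t) m)).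
  { induction m. exact (Pl_const r0 0 clone).
    apply (Pl_mul r0 (S m) m 1 (fun t => clpow (L t) m) L); auto. lia. }
  unfold Qf. apply (Pl_sum r0 3 (fun mu t => clmul (clpow (L t) mu) (para (pinv (w p))))).
  intros m Hm. apply (Pl_up' r0 m 3). lia.
  apply (Pl_mul r0 m m 0 (fun t => clpow (L t) m) (fun _ => para (pinv (w p)))). lia. auto. apply Pl_const.
Qed.

Definition Kf (A : nat) (v : Para) : R := Derive_n (fun s => Af h v s A) 4 0.

Lemma loc_ball (P : R -> Prop) : (forall t, Rabs t < r0 -> P t) -> locally 0 P.
Proof.
  intros H. eapply filter_imp; [|apply (inB_loc r0 0)]. intros; apply H; auto.
  rewrite Rabs_R0; apply r0_pos.
Qed.

Lemma Dn_zterm4 p A : (A < 8)%nat ->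
  Derive_n (fun s => zterm (w p) (xh s) A) 4 0 = Kf A (w p).
Proof.
  intros HA.
  destruct (Sm_chain r0 lam 5 _ _ (Af_w_Sm p)) as [D [HD0 [HD1 _]]].
  destruct (Pl_chain r0 3 _ (Qf_Pl p)) as [E [HE0 [HE1 HE2]]].
  assert (HE1' : forall j t, (j < 4)%nat -> Rabs t < r0 -> Cderiv (E j) (E (S j)) t) by (intros; apply HE1; auto; lia).
  replace (fun s => zterm (w p) (xh s) A) with (fun s => Af h (w p) s A + Qf p s A)
    by (apply functional_extensionality; intros; reflexivity).
  rewrite Derive_n_plus.
  - rewrite (chain_Dn (Qf p) E r0 4 A HE0 HE1' HA 4 0) by (auto; rewrite Rabs_R0; apply r0_pos).
    rewrite HE2 by (auto; rewrite Rabs_R0; apply r0_pos). unfold clzero, Kf. ring.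
  - apply loc_ball. intros t Ht k Hk. apply (chain_ex (Af h (w p)) D r0 5 A); auto; lia.
  - apply loc_ball. intros t Ht k Hk. apply (chain_ex (Qf p) E r0 4 A); auto.
Qed.

Definition fz (A p j : nat) (t : R) : R := Derive_n (fun s => zterm (w p) (xh s) A) j t.

Lemma fz_facts p A : (A < 8)%nat ->
  (forall j t, (j <= 5)%nat -> Rabs t < r0 -> Rabs (fz A p j t) <= MT p * lam ^ 5) /\
  (forall j t, (j < 5)%nat -> Rabs t < r0 -> is_derive (fz A p j) t (fz A p (S j) t)).
Proof.
  intros HA.
  assert (HS := zterm_Sm p).
  assert (HM : 0 <= MT p) by (apply (Sm_nonneg r0 lam r0_pos) in HS; auto).
  destruct (Sm_chain r0 lam 5 _ _ HS) as [D [HD0 [HD1 HD2]]].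
  split.
  - intros j t Hj Ht. unfold fz. rewrite (chain_Dn _ D r0 5 A HD0 HD1 HA j t Hj Ht).
    eapply Rle_trans. apply cnorm_coord; auto. eapply Rle_trans. apply HD2; auto.
    apply Rmult_le_compat_l; auto. apply Rle_pow; auto. apply lam_ge1.
  - intros j t Hj Ht. unfold fz. exact (chain_is (fun s => zterm (w p) (xh s)) D r0 5 A HD0 HD1 HA j t Hj Ht).
Qed.

Lemma MT_eq p : MT p = (2 ^ 5 * (8 * K) * (2 ^ 5 * ((16 * Hh + 4) * K)) ^ 4) * (1 / kap p ^ 5).
Proof. assert (G := kap_ge1 p). unfold MT, bp. field. lra. Qed.

Lemma MT_series : ex_series (fun p => MT p * lam ^ 5).
Proof.
  set (C1 := 2 ^ 5 * (8 * K) * (2 ^ 5 * ((16 * Hh + 4) * K)) ^ 4).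
  assert (HC1 : 0 <= C1) by (unfold C1; assert (G := Hh_pos); apply Rmult_le_pos; [apply Rmult_le_pos; [simpl; lra| lra] | apply pow_le; apply Rmult_le_pos; [simpl; lra| apply Rmult_le_pos; lra]]).
  assert (Hl : 0 <= lam ^ 5) by (apply pow_le; apply Hlam0).
  apply (ex_series_bounded _ (C1 * lam ^ 5 * 16384)).
  - intros p. rewrite MT_eq. fold C1. apply Rmult_le_pos; auto. apply Rmult_le_pos; auto.
    assert (G := kap_ge1 p). unfold Rdiv. rewrite Rmult_1_l. apply Rlt_le, Rinv_0_lt_compat, pow_lt. lra.
  - intros P. rewrite (rsum_ext _ (fun p => (C1 * lam ^ 5) * (1 / kap p ^ 5))) by (intros; rewrite MT_eq; fold C1; ring).
    rewrite rsum_scal. apply Rmult_le_compat_l. apply Rmult_le_pos; auto.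
    apply (count_bound kk kk_nz kk_inj P).
Qed.

Lemma clsum_coord (f : nat -> Cl) N A : clsum f N A = rsum (fun p => f p A) N.
Proof. induction N; simpl. reflexivity. unfold cladd. rewrite IHN. reflexivity. Qed.

Lemma g_formula A t : (A < 8)%nat -> Rabs t < r0 ->
  zeta4 w (xh t) A = Af h pzero t A + Series (fun p => fz A p 0 t).
Proof.
  intros HA Ht. unfold zeta4.
  assert (Hb : forall p, Rabs (fz A p 0 t) <= MT p * lam ^ 5) by (intros; apply (proj1 (fz_facts p A HA)); auto; lia).
  assert (Hcv := ser_cv _ _ Hb MT_series).
  rewrite (is_lim_seq_unique _ (Af h pzero t A + Series (fun p => fz A p 0 t))). reflexivity.
  apply is_lim_seq_incr_1.
  apply (is_lim_seq_ext (fun N => Af h pzero t A + sum_f_R0 (fun p => fz A p 0 t) N)).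
  - intros N. unfold zpartial, cladd. rewrite clsum_coord, rsum_sum_f.
    unfold Af. rewrite psub_zero. reflexivity.
  - apply is_lim_seq_plus'. apply is_lim_seq_const. apply is_lim_seq_Reals. exact Hcv.
Qed.

Definition vv (n : nat) : Para := match n with O => pzero | S p => w p end.
Definition refl2h (v : Para) : Para := fun j => 2 * h j - v j.

Lemma vv_inj m m' : peq (vv m) (vv m') -> m = m'.
Proof.
  destruct m as [|p]; destruct m' as [|q]; simpl; intros H; auto.
  - exfalso. apply (proj2 (proj1 Hen q)). intros j Hj. symmetry. apply H; auto.
  - exfalso. apply (proj2 (proj1 Hen p)). intros j Hj. apply H; auto.
  - f_equal. apply (proj1 (proj2 Hen)). auto.
Qed.

Lemma h_nz : ~ peq (refl2h pzero) pzero.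
Proof.
  intros H. assert (G := low_h).
  assert (pmax h = 0).
  { rewrite (pmax_peq h pzero). unfold pmax, pzero. rewrite Rabs_R0. unfold Rmax. repeat destruct Rle_dec; lra.
    intros j Hj. specialize (H j Hj). unfold refl2h, pzero in *. lra. }
  rewrite H0 in G. lra.
Qed.

Lemma refl_L n : inL omega (refl2h (vv n)).
Proof.
  destruct n as [|p].
  - exists (fun a => if eps a then 1%Z else 0%Z). intros j Hj. unfold refl2h, vv, pzero.
    rewrite h_comb. unfold comb, e. cbn [rsum]. destruct (eps 0%nat), (eps 1%nat), (eps 2%nat), (eps 3%nat); cbv beta iota; ring.
  - exists (fun a => ((if eps a then 1 else 0) - kk p a)%Z). intros j Hj. unfold refl2h, vv.
    rewrite h_comb, kk_spec by auto. unfold comb, e. cbn [rsum]. rewrite !minus_IZR.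
    destruct (eps 0%nat), (eps 1%nat), (eps 2%nat), (eps 3%nat); cbv beta iota; ring.
Qed.

Lemma sig_ex n : exists m, peq (vv m) (refl2h (vv n)).
Proof.
  destruct (Classical_Prop.classic (peq (refl2h (vv n)) pzero)) as [Hz|Hz].
  - exists O. intros j Hj. symmetry. apply Hz; auto.
  - destruct (proj2 (proj2 Hen) _ (refl_L n) Hz) as [p Hp]. exists (S p). simpl. auto.
Qed.

Definition sigma (n : nat) : nat := proj1_sig (constructive_indefinite_description _ (sig_ex n)).
Lemma sigma_spec n : peq (vv (sigma n)) (refl2h (vv n)).
Proof. unfold sigma. destruct (constructive_indefinite_description _ _) as [m Hm]. simpl. auto. Qed.

Lemma sigma_invol n : sigma (sigma n) = n.
Proof.
  apply vv_inj. intros j Hj. rewrite (sigma_spec (sigma n) j Hj). unfold refl2h.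
  rewrite (sigma_spec n j Hj). unfold refl2h. ring.
Qed.

Lemma Af_peq v v' s A : peq v v' -> Af h v s A = Af h v' s A.
Proof.
  intros H. unfold Af, para, pinv, pnorm2, psub.
  rewrite (H 0%nat), (H 1%nat), (H 2%nat), (H 3%nat) by lia. reflexivity.
Qed.

Lemma Kf_peq A v v' : peq v v' -> Kf A v = Kf A v'.
Proof.
  intros H. unfold Kf. f_equal. apply functional_extensionality. intros s. apply Af_peq; auto.
Qed.

Lemma Af_refl v s A : Af h (refl2h v) s A = - Af h v (- s) A.
Proof.
  unfold Af.
  assert (E1 : psub (shift0 h s) (refl2h v) = (fun j => - psub (shift0 h (- s)) v j)).
  { apply functional_extensionality. intros j. unfold psub, shift0, refl2h. destruct (j =? 0)%nat; ring. }
  rewrite E1.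
  assert (E2 : forall y : Para, pinv (fun j => - y j) = (fun j => - pinv y j)).
  { intros y. apply functional_extensionality. intros j. unfold pinv.
    replace (pnorm2 (fun j0 => - y j0)) with (pnorm2 y) by (unfold pnorm2; ring).
    destruct (j =? 0)%nat; unfold Rdiv; ring. }
  rewrite E2. unfold para.
  destruct (A =? 0)%nat; [ring|]. destruct (A =? 1)%nat; [ring|]. destruct (A =? 2)%nat; [ring|].
  destruct (A =? 4)%nat; [ring|]. ring.
Qed.

Lemma vv_Sm n : exists M, Sm r0 lam 5 M (Af h (vv n)).
Proof. destruct n as [|p]. exists (8 * K); apply Af_0_Sm. exists (8 * K / kap p); apply Af_w_Sm. Qed.

Lemma Kf_refl A n : (A < 8)%nat -> Kf A (refl2h (vv n)) = - Kf A (vv n).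
Proof.
  intros HA. unfold Kf.
  rewrite (Derive_n_ext (fun s => Af h (refl2h (vv n)) s A) (fun s => - Af h (vv n) (- s) A)) by (intros; apply Af_refl).
  rewrite Derive_n_opp.
  rewrite (Derive_n_comp_opp (fun s => Af h (vv n) s A)).
  - rewrite Ropp_0. simpl. ring.
  - rewrite Ropp_0. destruct (vv_Sm n) as [M HM].
    destruct (Sm_chain r0 lam 5 _ _ HM) as [D [HD0 [HD1 _]]].
    apply loc_ball. intros t Ht k Hk. apply (chain_ex (Af h (vv n)) D r0 5 A); auto; lia.
Qed.

Lemma sum_zero A : (A < 8)%nat -> Kf A pzero + Series (fun p => Kf A (w p)) = 0.
Proof.
  intros HA.
  set (a := fun n => Kf A (vv n)).
  assert (Hab : ex_series (fun p => Rabs (a (S p)))).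
  { apply (ser_ex _ (fun p => MT p * lam ^ 5)). intros p. rewrite Rabs_Rabsolu.
    unfold a; simpl vv. rewrite <- Dn_zterm4 by auto.
    exact (proj1 (fz_facts p A HA) 4%nat 0 ltac:(lia) ltac:(rewrite Rabs_R0; apply r0_pos)).
    apply MT_series. }
  assert (Hab' : ex_series (fun n => Rabs (a n))) by (apply ex_series_incr_1; auto).
  assert (Z := invol_sum a sigma sigma_invol).
  rewrite Series_incr_1 in Z.
  - apply Z; auto. intros n. unfold a. rewrite (Kf_peq A _ _ (sigma_spec n)). apply Kf_refl; auto.
  - apply ex_series_Rabs; auto.
Qed.

Theorem main_sec A : (A < 8)%nat ->
  let g := fun t => zeta4 w (shift0 (halfper omega eps) t) A in
  (forall k, (k <= 3)%nat -> locally 0 (fun t => ex_derive_n g k t)) /\ is_derive_n g 4 0 0.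
Proof.
  intros HA g.
  destruct (Sm_chain r0 lam 5 _ _ Af_0_Sm) as [D0 [HD00 [HD01 _]]].
  set (G := fun j t => Derive_n (fun s => Af h pzero s A) j t + Series (fun p => fz A p j t)).
  assert (Hg : forall t, Rabs t < r0 -> g t = G O t).
  { intros t Ht. unfold g, G. simpl. apply g_formula; auto. }
  assert (HG : forall j t, (j < 4)%nat -> Rabs t < r0 -> is_derive (G j) t (G (S j) t)).
  { intros j t Hj Ht. unfold G.
    apply (is_derive_plus (Derive_n (fun s => Af h pzero s A) j) (fun t => Series (fun p => fz A p j t))).
    - exact (chain_is (Af h pzero) D0 r0 5 A HD00 HD01 HA j t ltac:(lia) Ht).
    - apply (termwise r0 (fz A) (fun p => MT p * lam ^ 5) 5 r0_pos MT_series); auto; try lia.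
      + intros p j' t' Hj' Ht'. apply (proj2 (fz_facts p A HA)); auto.
      + intros p j' t' Hj' Ht'. apply (proj1 (fz_facts p A HA)); auto. }
  split.
  - intros k Hk. apply loc_ball. intros t Ht. apply (real_chain_ex g G r0 4); auto.
  - assert (H4 := real_chain_is g G r0 4 Hg HG 3 ltac:(lia) 0 ltac:(rewrite Rabs_R0; apply r0_pos)).
    replace (G 4%nat 0) with 0 in H4. exact H4.
    unfold G. rewrite (Series_ext _ (fun p => Kf A (w p))).
    + change (Derive_n (fun s => Af h pzero s A) 4 0) with (Kf A pzero). rewrite (sum_zero A HA). reflexivity.
    + intros p. unfold fz. apply Dn_zterm4; auto.
Qed.

End Main.


Theorem mainTheorem9 (omega : nat -> Para) (w : nat -> Para) :
  lin_indep4 omega ->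
  enumerates_L0 omega w ->
  forall eps : nat -> bool,
    (exists a, (a < 4)%nat /\ eps a = true) ->
    forall A, (A < 8)%nat ->
      let g := fun t => zeta4 w (shift0 (halfper omega eps) t) A in
      (forall k, (k <= 3)%nat -> locally 0 (fun t => ex_derive_n g k t)) /\
      is_derive_n g 4 0 0.
Proof.
  intros Hli Hen eps Heps A HA.
  destruct (lat_bound omega Hli) as [K [HK0 HKb]].
  exact (main_sec omega w Hen eps Heps K HK0 HKb A HA).
Qed.
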